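(* For every sequent $\Gamma\Rightarrow\Delta$ of $\mathtt{TPDL}$, the following are equivalent: (1) $\Gamma\Rightarrow\Delta$ is provable in $\mathtt{GTPDL}$; (2) $\Gamma\Rightarrow\Delta$ is provable in $\mathtt{CGTPDL}$; (3) $\Gamma\Rightarrow\Delta$ is valid.
   Context: Fix sets $\mathsf{Prop}$ and $\mathsf{AtProg}$. $\mathtt{TPDL}$ formulas/programs: $\varphi ::= \bot \mid p \mid (\varphi\to\varphi) \mid [\pi]\varphi \mid [\pi]^{\leftarrow}\varphi$, $\pi ::= \alpha \mid \pi;\pi \mid \pi\cup\pi \mid \pi^{*} \mid \varphi?$. $[\pi]\Gamma=\{[\pi]\varphi:\varphi\in\Gamma\}$, similarly $[\pi]^{\leftarrow}\Gamma$. A model is $M=(W,(R_\alpha),V)$, $W\neq\emptyset$, $R_\alpha\subseteq W\times W$, $V:W\to\mathcal P(\mathsf{Prop})$; $R_{\pi_0;\pi_1}$ composition, $R_{\pi_0\cup\pi_1}$ union, $R_{\pi^*}$ reflexive–transitive closure of $R_\pi$, $R_{\psi?}=\{(w,w):M,w\models\psi\}$; $M,w\not\models\bot$, $M,w\models p$ iff $p\in V(w)$, $\to$ classical, $M,w\models[\pi]\varphi$ iff $\varphi$ holds at all $v$ with $wR_\pi v$, $M,w\models[\pi]^{\leftarrow}\varphi$ iff $\varphi$ holds at all $v$ with $vR_\pi w$. A sequent is a pair of finite sets of formulas; valid means in every model at every state where all of $\Gamma$ hold, some formula of $\Delta$ holds. Common rules (premises / conclusion): (Ax) / $\Gamma\Rightarrow\Delta$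 with $\Gamma\cap\Delta\neq\emptyset$; ($\bot$) / $\Gamma,\bot\Rightarrow\Delta$; ($\to$L) $\Gamma\Rightarrow\varphi,\Delta$ and $\Gamma,\psi\Rightarrow\Delta$ / $\Gamma,\varphi\to\psi\Rightarrow\Delta$; ($\to$R) $\Gamma,\varphi\Rightarrow\psi,\Delta$ / $\Gamma\Rightarrow\varphi\to\psi,\Delta$; (Wk) $\Gamma\Rightarrow\Delta$ / $\Gamma'\Rightarrow\Delta'$, $\Gamma\subseteq\Gamma'$, $\Delta\subseteq\Delta'$; (Cut) $\Gamma\Rightarrow\varphi,\Delta$ and $\Gamma,\varphi\Rightarrow\Delta$ / $\Gamma\Rightarrow\Delta$; ($[\,]$) $\Gamma\Rightarrow\varphi,[\pi]^{\leftarrow}\Delta$ / $[\pi]\Gamma\Rightarrow[\pi]\varphi,\Delta$; ($[\,]^{\leftarrow}$) $\Gamma\Rightarrow\varphi,[\pi]\Delta$ / $[\pi]^{\leftarrow}\Gamma\Rightarrow[\pi]^{\leftarrow}\varphi,\Delta$; ($[;]$L) $\Gamma,[\pi_0][\pi_1]\varphi\Rightarrow\Delta$ / $\Gamma,[\pi_0;\pi_1]\varphi\Rightarrow\Delta$; ($[;]$R) $\Gamma\Rightarrow[\pi_0][\pi_1]\varphi,\Delta$ / $\Gamma\Rightarrow[\pi_0;\pi_1]\varphi,\Delta$; ($[\cup]$L) $\Gamma,[\pi_0]\varphi,[\pi_1]\varphi\Rightarrow\Delta$ / $\Gamma,[\pi_0\cup\pi_1]\varphi\Rightarrow\Delta$;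 ($[\cup]$R) $\Gamma\Rightarrow\Delta,[\pi_0]\varphi$ and $\Gamma\Rightarrow\Delta,[\pi_1]\varphi$ / $\Gamma\Rightarrow[\pi_0\cup\pi_1]\varphi,\Delta$; ($[*]$L) $\Gamma,\varphi,[\pi][\pi^*]\varphi\Rightarrow\Delta$ / $\Gamma,[\pi^*]\varphi\Rightarrow\Delta$; ($[?]$L) $\Gamma\Rightarrow\varphi,\Delta$ and $\Gamma,\psi\Rightarrow\Delta$ / $\Gamma,[\varphi?]\psi\Rightarrow\Delta$; ($[?]$R) $\Gamma,\varphi\Rightarrow\psi,\Delta$ / $\Gamma\Rightarrow[\varphi?]\psi,\Delta$. $\mathtt{GTPDL}$ = common rules plus ($[*]$R) $\Gamma,\varphi\Rightarrow[\pi]\varphi$ / $[\pi^*]\Gamma,\varphi\Rightarrow[\pi^*]\varphi$; a $\mathtt{GTPDL}$ proof is a finite tree of sequents each node concluding a rule instance with its children as premises (leaves are Ax/$\bot$). $\mathtt{CGTPDL}$ = common rules plus (C-s) $\Gamma\Rightarrow\varphi,\Delta$ and $\Gamma\Rightarrow[\pi][\pi^*]\varphi,\Delta$ / $\Gamma\Rightarrow[\pi^*]\varphi,\Delta$. $\mathtt{CGTPDL}$ proofs: a pre-proof is a finite tree of sequents built from rule instances whose leaves are Ax/$\bot$ instances or buds, together with an assignment to each bud of a companion, an inner node with the same sequent; the derivation graph identifies each bud with its companion; a path is a sequence of nodes each a premise of the previous one's rule instance. A trace following a path $(\Gamma_i\Rightarrow\Delta_i)$ is a sequence $(\tau_i)$,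 $\tau_i\in\Delta_i$, such that: at ($\to$R) with principal $\varphi\to\psi$, $\tau_{i+1}=\tau_i$ or ($\tau_i=\varphi\to\psi$ and $\tau_{i+1}=\psi$); at ($[\,]$) with principal $[\pi]\varphi$, $\tau_i=[\pi]\varphi$, $\tau_{i+1}=\varphi$; at ($[\,]^{\leftarrow}$) with principal $[\pi]^{\leftarrow}\varphi$, $\tau_i=[\pi]^{\leftarrow}\varphi$, $\tau_{i+1}=\varphi$; at ($[;]$R), $\tau_{i+1}=\tau_i$ or $\tau_i=[\pi_0;\pi_1]\varphi$ (principal) and $\tau_{i+1}=[\pi_0][\pi_1]\varphi$; at ($[\cup]$R) going to the premise with $[\pi_j]\varphi$, $\tau_{i+1}=\tau_i$ or $\tau_i$ principal and $\tau_{i+1}=[\pi_j]\varphi$; at ($[?]$R), $\tau_{i+1}=\tau_i$ or $\tau_i=[\varphi?]\psi$ principal and $\tau_{i+1}=\psi$; at (C-s) with principal $[\pi^*]\varphi$, going to the first premise, $\tau_{i+1}=\tau_i$ or ($\tau_i=[\pi^*]\varphi$, $\tau_{i+1}=\varphi$); going to the second premise, $\tau_{i+1}=\tau_i$ or ($\tau_i=[\pi^*]\varphi$, $\tau_{i+1}=[\pi][\pi^*]\varphi$, a progress point); all other rules $\tau_{i+1}=\tau_i$. Global trace condition: every infinite path has a tail followed by a trace with infinitely many progress points. A $\mathtt{CGTPDL}$ proof is a pre-proof satisfying the global trace condition. *)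

(* Defs.v *)
From Stdlib Require Import List Relations.
Import ListNotations.
Set Implicit Arguments.

Section TPDL.
Variables (P A : Type).

Inductive form : Type :=
| Bot : form
| Var : P -> form
| Imp : form -> form -> form
| Box : prog -> form -> form
| BoxC : prog -> form -> form
with prog : Type :=
| Atom : A -> prog
| Seq : prog -> prog -> prog
| Cup : prog -> prog -> prog
| Star : prog -> prog
| Test : form -> prog.

Record model : Type := Model {
  mW : Type;
  mR : A -> mW -> mW -> Prop;
  mV : mW -> P -> Prop }.

Fixpoint sat (M : model) (w : mW M) (f : form) {struct f} : Prop :=
  match f with
  | Bot => False
  | Var p => mV M w p
  | Imp f1 f2 => sat M w f1 -> sat M w f2
  | Box pi f1 => forall v, rel M pi w v -> sat M v f1
  | BoxC pi f1 => forall v, rel M pi v w -> sat M v f1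
  end
with rel (M : model) (pi : prog) (w v : mW M) {struct pi} : Prop :=
  match pi with
  | Atom a => mR M a w v
  | Seq p0 p1 => exists u, rel M p0 w u /\ rel M p1 u v
  | Cup p0 p1 => rel M p0 w v \/ rel M p1 w v
  | Star p => clos_refl_trans (mW M) (fun x y => rel M p x y) w v
  | Test f1 => w = v /\ sat M w f1
  end.

(* A sequent is a pair of finite sets of formulas, represented by lists;
   lists are only ever compared up to having the same elements. *)
Definition sequent : Type := (list form * list form)%type.

Definition seteq (l1 l2 : list form) : Prop := forall x, In x l1 <-> In x l2.
Definition seqeq (s1 s2 : sequent) : Prop :=
  seteq (fst s1) (fst s2) /\ seteq (snd s1) (snd s2).

Definition valid (s : sequent) : Prop :=
  forall (M : model) (w : mW M),
    (forall f, In f (fst s) -> sat M w f) ->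
    exists f, In f (snd s) /\ sat M w f.

Inductive rule : Type :=
| RAx (G D : list form)
| RBot (G D : list form)
| RImpL (G D : list form) (f g : form)
| RImpR (G D : list form) (f g : form)
| RWk (G D G' D' : list form)
| RCut (G D : list form) (f : form)
| RBox (G D : list form) (p : prog) (f : form)
| RBoxC (G D : list form) (p : prog) (f : form)
| RSeqL (G D : list form) (p0 p1 : prog) (f : form)
| RSeqR (G D : list form) (p0 p1 : prog) (f : form)
| RCupL (G D : list form) (p0 p1 : prog) (f : form)
| RCupR (G D : list form) (p0 p1 : prog) (f : form)
| RStarL (G D : list form) (p : prog) (f : form)
| RTestL (G D : list form) (f g : form)
| RTestR (G D : list form) (f g : form)
| RStarR (G : list form) (p : prog) (f : form)
| RCs (G D : list form) (p : prog) (f : form).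

Definition side (r : rule) : Prop :=
  match r with
  | RAx G D => exists f, In f G /\ In f D
  | RWk G D G' D' => incl G G' /\ incl D D'
  | _ => True
  end.

Definition concl (r : rule) : sequent :=
  match r with
  | RAx G D => (G, D)
  | RBot G D => (Bot :: G, D)
  | RImpL G D f g => (Imp f g :: G, D)
  | RImpR G D f g => (G, Imp f g :: D)
  | RWk _ _ G' D' => (G', D')
  | RCut G D _ => (G, D)
  | RBox G D p f => (map (Box p) G, Box p f :: D)
  | RBoxC G D p f => (map (BoxC p) G, BoxC p f :: D)
  | RSeqL G D p0 p1 f => (Box (Seq p0 p1) f :: G, D)
  | RSeqR G D p0 p1 f => (G, Box (Seq p0 p1) f :: D)
  | RCupL G D p0 p1 f => (Box (Cup p0 p1) f :: G, D)
  | RCupR G D p0 p1 f => (G, Box (Cup p0 p1) f :: D)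
  | RStarL G D p f => (Box (Star p) f :: G, D)
  | RTestL G D f g => (Box (Test f) g :: G, D)
  | RTestR G D f g => (G, Box (Test f) g :: D)
  | RStarR G p f => (f :: map (Box (Star p)) G, [Box (Star p) f])
  | RCs G D p f => (G, Box (Star p) f :: D)
  end.

Definition prems (r : rule) : list sequent :=
  match r with
  | RAx _ _ => []
  | RBot _ _ => []
  | RImpL G D f g => [(G, f :: D); (g :: G, D)]
  | RImpR G D f g => [(f :: G, g :: D)]
  | RWk G D _ _ => [(G, D)]
  | RCut G D f => [(G, f :: D); (f :: G, D)]
  | RBox G D p f => [(G, f :: map (BoxC p) D)]
  | RBoxC G D p f => [(G, f :: map (Box p) D)]
  | RSeqL G D p0 p1 f => [(Box p0 (Box p1 f) :: G, D)]
  | RSeqR G D p0 p1 f => [(G, Box p0 (Box p1 f) :: D)]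
  | RCupL G D p0 p1 f => [(Box p0 f :: Box p1 f :: G, D)]
  | RCupR G D p0 p1 f => [(G, Box p0 f :: D); (G, Box p1 f :: D)]
  | RStarL G D p f => [(f :: Box p (Box (Star p) f) :: G, D)]
  | RTestL G D f g => [(G, f :: D); (g :: G, D)]
  | RTestR G D f g => [(f :: G, g :: D)]
  | RStarR G p f => [(f :: G, [Box p f])]
  | RCs G D p f => [(G, f :: D); (G, Box p (Box (Star p) f) :: D)]
  end.

Definition common_rule (r : rule) : Prop :=
  match r with RStarR _ _ _ | RCs _ _ _ _ => False | _ => True end.
Definition gtpdl_rule (r : rule) : Prop :=
  common_rule r \/ match r with RStarR _ _ _ => True | _ => False end.
Definition cgtpdl_rule (r : rule) : Prop :=
  common_rule r \/ match r with RCs _ _ _ _ => True | _ => False end.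

Inductive gprovable : sequent -> Prop :=
| gp_node : forall (r : rule) (s : sequent),
    gtpdl_rule r -> side r -> seqeq s (concl r) ->
    (forall s', In s' (prems r) -> gprovable s') ->
    gprovable s.

(* A finite tree: inner nodes carry their sequent, their rule instance and
   their children (one per premise, in order); buds carry their sequent and
   the address (list of child indices from the root) of their companion. *)
Inductive ptree : Type :=
| PNode (s : sequent) (r : rule) (ts : list ptree)
| PBud (s : sequent) (companion : list nat).

Definition label (t : ptree) : sequent :=
  match t with PNode s _ _ => s | PBud s _ => s end.

Fixpoint subtree (t : ptree) (a : list nat) : option ptree :=
  match a with
  | [] => Some t
  | k :: a' =>
      match t with
      | PNode _ _ ts =>
          match nth_error ts k with Some t' => subtree t' a' | None => None end
      | PBud _ _ => None
      end
  end.

Definition preproof (t : ptree) : Prop :=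
  (forall a s r ts, subtree t a = Some (PNode s r ts) ->
     cgtpdl_rule r /\ side r /\ seqeq s (concl r) /\
     length ts = length (prems r) /\
     (forall k t' s', nth_error ts k = Some t' -> nth_error (prems r) k = Some s' ->
        seqeq (label t') s')) /\
  (forall a s c, subtree t a = Some (PBud s c) ->
     exists s' r ts, subtree t c = Some (PNode s' r ts) /\ seqeq s s').

(* Derivation graph (buds identified with their companions): an edge from the
   inner node at address a, through its k-th premise, to the node at b. *)
Definition edge (t : ptree) (a : list nat) (k : nat) (b : list nat) : Prop :=
  exists s r ts t', subtree t a = Some (PNode s r ts) /\ nth_error ts k = Some t' /\
    match t' with
    | PNode _ _ _ => b = a ++ [k]
    | PBud _ c => b = c
    end.

Definition tstep (r : rule) (k : nat) (x y : form) : Prop :=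
  match r with
  | RImpR _ _ f g => y = x \/ (x = Imp f g /\ y = g)
  | RBox _ _ p f => x = Box p f /\ y = f
  | RBoxC _ _ p f => x = BoxC p f /\ y = f
  | RSeqR _ _ p0 p1 f => y = x \/ (x = Box (Seq p0 p1) f /\ y = Box p0 (Box p1 f))
  | RCupR _ _ p0 p1 f =>
      y = x \/ (x = Box (Cup p0 p1) f /\ y = Box (match k with 0 => p0 | _ => p1 end) f)
  | RTestR _ _ f g => y = x \/ (x = Box (Test f) g /\ y = g)
  | RCs _ _ p f =>
      y = x \/ (x = Box (Star p) f /\
                y = match k with 0 => f | _ => Box p (Box (Star p) f) end)
  | _ => y = x
  end.

Definition progress (r : rule) (k : nat) (x y : form) : Prop :=
  match r with
  | RCs _ _ p f => k = 1 /\ x = Box (Star p) f /\ y = Box p (Box (Star p) f)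
  | _ => False
  end.

Definition global_trace_condition (t : ptree) : Prop :=
  forall (pth : nat -> list nat) (ks : nat -> nat),
    (forall i, edge t (pth i) (ks i) (pth (S i))) ->
    exists (n : nat) (tau : nat -> form),
      (forall i, n <= i -> exists s r ts,
          subtree t (pth i) = Some (PNode s r ts) /\
          In (tau i) (snd s) /\ tstep r (ks i) (tau i) (tau (S i))) /\
      (forall m, exists i, m <= i /\ n <= i /\
          exists s r ts, subtree t (pth i) = Some (PNode s r ts) /\
            progress r (ks i) (tau i) (tau (S i))).

Definition cprovable (s : sequent) : Prop :=
  exists t : ptree, preproof t /\ global_trace_condition t /\ seqeq (label t) s.

End TPDL.

(* Main.v *)
Require Import Defs.
From Stdlib Require Import List Relations Classical ClassicalEpsilon Lia Arith.
Import ListNotations.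
Arguments Atom {P A} _.
Arguments Var {P A} _.
Arguments Bot {P A}.


Section Sem.
Variables P A : Type.
Notation form := (form P A).
Notation prog := (prog P A).
Notation model := (model P A).

Definition falsif (M : model) (w : mW M) (s : sequent P A) : Prop :=
  (forall f, In f (fst s) -> sat M w f) /\ (forall f, In f (snd s) -> ~ sat M w f).

Lemma valid_falsif (s : sequent P A) : valid s <-> forall M w, ~ falsif M w s.
Proof.
  split.
  - intros H M w [H1 H2]. destruct (H M w H1) as [f [Hf Hs]]. exact (H2 f Hf Hs).
  - intros H M w H1. apply NNPP. intro Hn. apply (H M w). split; auto.
    intros f Hf Hs. apply Hn. exists f; auto.
Qed.

Lemma falsif_seqeq M w s1 s2 : seqeq s1 s2 -> falsif M w s1 -> falsif M w s2.
Proof.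
  intros [E1 E2] [H1 H2]; split; intros f Hf.
  - apply H1, E1, Hf.
  - apply H2, E2, Hf.
Qed.

Inductive Dstar {W : Type} (Rk : W -> W -> nat -> Prop) : W -> W -> nat -> Prop :=
| ds0 w : Dstar Rk w w 0
| dsS w u v k1 k2 : Rk w u k1 -> Dstar Rk u v k2 -> Dstar Rk w v (S (k1 + k2)).

Fixpoint D (M : model) (p : prog) : mW M -> mW M -> nat -> Prop :=
  match p with
  | Atom a => fun w v n => mR M a w v /\ n = 0
  | Seq p q => fun w v n => exists u n1 n2, D M p w u n1 /\ D M q u v n2 /\ n = n1 + n2
  | Cup p q => fun w v n => D M p w v n \/ D M q w v n
  | Star p => Dstar (D M p)
  | Test f => fun w v n => w = v /\ sat M w f /\ n = 0
  end.

Lemma D_rel M p : forall w v, rel M p w v <-> exists n, D M p w v n.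
Proof.
  induction p; intros w v; simpl.
  - split; [intro H; exists 0; auto | intros [n [H _]]; auto].
  - split.
    + intros [u [H1 H2]]. apply IHp1 in H1 as [n1 H1]. apply IHp2 in H2 as [n2 H2].
      exists (n1 + n2), u, n1, n2; auto.
    + intros [n [u [n1 [n2 [H1 [H2 _]]]]]]. exists u; split.
      apply IHp1; eauto. apply IHp2; eauto.
  - rewrite IHp1, IHp2. split.
    + intros [[n H]|[n H]]; exists n; auto.
    + intros [n [H|H]]; [left|right]; exists n; auto.
  - split.
    + intro H. apply clos_rt_rt1n in H. induction H.
      * exists 0; constructor.
      * destruct IHclos_refl_trans_1n as [n Hn]. apply IHp in H as [k Hk].
        exists (S (k + n)). econstructor; eauto.
    + intros [n H]. induction H.
      * apply rt_refl.
      * eapply rt_trans; [apply rt_step|exact IHDstar]. apply IHp; eauto.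
  - split.
    + intros [H1 H2]. exists 0; auto.
    + intros [n [H1 [H2 _]]]; auto.
Qed.

Fixpoint F (M : model) (f : form) : mW M -> nat -> Prop :=
  match f with
  | Bot => fun w n => n = 0
  | Var q => fun w n => ~ mV M w q /\ n = 0
  | Imp f g => fun w n => sat M w f /\ F M g w n
  | Box p g => fun w n => exists v k j, D M p w v k /\ F M g v j /\ n = k + j
  | BoxC p g => fun w n => exists v k j, D M p v w k /\ F M g v j /\ n = k + j
  end.

Lemma F_sat M f : forall w, ~ sat M w f <-> exists n, F M f w n.
Proof.
  induction f; intros w; simpl.
  - split; [intros _; exists 0; auto| intros _ H; exact H].
  - split; [intro H; exists 0; auto | intros [n [H _]]; auto].
  - split.
    + intro H. assert (sat M w f1) by (apply NNPP; intro H1; apply H; intro; contradiction).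
      assert (~ sat M w f2) by (intro; apply H; auto).
      apply IHf2 in H1 as [n Hn]. exists n; auto.
    + intros [n [H1 H2]] H. apply (proj2 (IHf2 w)); eauto.
  - split.
    + intro H. apply not_all_ex_not in H as [v Hv].
      apply imply_to_and in Hv as [H1 H2]. apply D_rel in H1 as [k Hk].
      apply IHf in H2 as [j Hj]. exists (k + j), v, k, j; auto.
    + intros [n [v [k [j [H1 [H2 _]]]]]] H.
      apply (proj2 (IHf v)); [eauto|]. apply H, D_rel; eauto.
  - split.
    + intro H. apply not_all_ex_not in H as [v Hv].
      apply imply_to_and in Hv as [H1 H2]. apply D_rel in H1 as [k Hk].
      apply IHf in H2 as [j Hj]. exists (k + j), v, k, j; auto.
    + intros [n [v [k [j [H1 [H2 _]]]]]] H.
      apply (proj2 (IHf v)); [eauto|]. apply H, D_rel; eauto.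
Qed.

Lemma F_nsat M f w n : F M f w n -> ~ sat M w f.
Proof. intro H. apply F_sat. eauto. Qed.

Definition isMin M f w n := F M f w n /\ forall m, F M f w m -> n <= m.

Lemma min_exists M f w n : F M f w n -> exists m, isMin M f w m.
Proof.
  revert n. induction n as [n IH] using lt_wf_ind. intro Hn.
  destruct (classic (exists m, m < n /\ F M f w m)) as [[m [H1 H2]]|H].
  - eauto.
  - exists n; split; auto. intros m Hm. destruct (le_lt_dec n m); auto.
    exfalso; eauto.
Qed.

Definition mu M f w : nat := epsilon (inhabits 0) (fun n => isMin M f w n).

Lemma mu_spec M f w : ~ sat M w f -> isMin M f w (mu M f w).
Proof.
  intro H. apply F_sat in H as [n Hn]. apply min_exists in Hn.
  unfold mu. apply epsilon_spec. exact Hn.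
Qed.

Lemma mu_le M f w j : F M f w j -> mu M f w <= j.
Proof. intro H. apply (proj2 (mu_spec _ _ _ (F_nsat _ _ _ _ H))). exact H. Qed.

Lemma mu_F M f w : ~ sat M w f -> F M f w (mu M f w).
Proof. intro H. apply (mu_spec M f w H). Qed.

Lemma D_rel' M p w v k : D M p w v k -> rel M p w v.
Proof. intro H. apply D_rel. eauto. Qed.

Lemma in_map_box (p : prog) G x : In x (map (Box p) G) -> exists g, x = Box p g /\ In g G.
Proof. intro H. apply in_map_iff in H as [g [H1 H2]]. eauto. Qed.
Lemma in_map_boxc (p : prog) G x : In x (map (BoxC p) G) -> exists g, x = BoxC p g /\ In g G.
Proof. intro H. apply in_map_iff in H as [g [H1 H2]]. eauto. Qed.

Definition stepprop M (r : rule P A) k (w w' : mW M) (s' : sequent P A) :=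
  forall x y, In x (snd (concl r)) -> In y (snd s') -> tstep r k x y ->
    mu M y w' <= mu M x w /\ (progress r k x y -> mu M y w' < mu M x w).

Lemma step_same M (r : rule P A) k w s' :
  (forall x y, tstep r k x y -> y = x) -> (forall x y, ~ progress r k x y) ->
  stepprop M r k w w s'.
Proof. intros H1 H2 x y _ _ Ht. apply H1 in Ht; subst; split; auto. intro H; elim (H2 _ _ H). Qed.

Ltac fsplit := split; simpl; intros ? Hin; repeat (destruct Hin as [<-|Hin]); auto.

Lemma box_neq (p : prog) (f : form) : Box p f <> f.
Proof. induction f; try discriminate. intro H. injection H as -> H. auto. Qed.

Ltac go k s w := exists k, s, w; split; [reflexivity| split; [split; simpl|]].

Lemma rule_step (r : rule P A) M w :
  cgtpdl_rule r -> side r -> falsif M w (concl r) ->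
  exists k s' w', nth_error (prems r) k = Some s' /\ falsif M w' s' /\ stepprop M r k w w' s'.
Proof.
  intros Hr Hs [H1 H2].
  destruct r; simpl in *.
  - destruct Hs as [f [Hf1 Hf2]]. elim (H2 f Hf2 (H1 f Hf1)).
  - elim (H1 Bot (or_introl eq_refl)).
  -
    assert (Hi := H1 _ (or_introl eq_refl)). simpl in Hi.
    destruct (classic (sat M w f)) as [Hf|Hf].
    + go 1 ((g :: G, D0)) w; auto.
      * simpl; intros x [<-|Hx]; auto.
      * apply step_same; simpl; auto.
    + go 0 ((G, f :: D0)) w; auto.
      * simpl; intros x [<-|Hx]; auto.
      * apply step_same; simpl; auto.
  -
    assert (Hi := H2 _ (or_introl eq_refl)). simpl in Hi.
    assert (Hf : sat M w f) by (apply NNPP; intro Hn; apply Hi; intro; contradiction).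
    assert (Hg : ~ sat M w g) by (intro; apply Hi; auto).
    go 0 ((f :: G, g :: D0)) w; auto.
    + simpl; intros x [<-|Hx]; auto.
    + simpl; intros x [<-|Hx]; auto.
    + intros x y Hx Hy [->|[-> ->]]; simpl; split; auto; try tauto.
      assert (Hm := mu_F M (Imp f g) w Hi). simpl in Hm. apply mu_le, Hm.
  -
    destruct Hs as [I1 I2].
    go 0 ((G, D0)) w; auto.
    apply step_same; simpl; auto.
  -
    destruct (classic (sat M w f)) as [Hf|Hf].
    + go 1 ((f :: G, D0)) w; auto.
      * intros x [<-|Hx]; auto.
      * apply step_same; simpl; auto.
    + go 0 ((G, f :: D0)) w; auto.
      * intros x [<-|Hx]; auto.
      * apply step_same; simpl; auto.
  -
    assert (Hi := H2 _ (or_introl eq_refl)).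
    assert (Hm := mu_F _ _ _ Hi). simpl in Hm. destruct Hm as [v [k [j [Hd [Hj Heq]]]]].
    go 0 ((G, f :: map (BoxC p) D0)) v.
    + intros x Hx. apply (H1 (Box p x)); [apply in_map; auto|]. eapply D_rel'; eauto.
    + intros x [<-|Hx]. eapply F_nsat; eauto.
      apply in_map_boxc in Hx as [g [-> Hg]]. simpl. intro H. apply (H2 g); auto.
      apply H. eapply D_rel'; eauto.
    + intros x y Hx Hy [-> ->]. split; [|simpl; tauto]. rewrite Heq. apply mu_le in Hj. lia.
  -
    assert (Hi := H2 _ (or_introl eq_refl)).
    assert (Hm := mu_F _ _ _ Hi). simpl in Hm. destruct Hm as [v [k [j [Hd [Hj Heq]]]]].
    go 0 ((G, f :: map (Box p) D0)) v.
    + intros x Hx. apply (H1 (BoxC p x)); [apply in_map; auto|]. eapply D_rel'; eauto.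
    + intros x [<-|Hx]. eapply F_nsat; eauto.
      apply in_map_box in Hx as [g [-> Hg]]. simpl. intro H. apply (H2 g); auto.
      apply H. eapply D_rel'; eauto.
    + intros x y Hx Hy [-> ->]. split; [|simpl; tauto]. rewrite Heq. apply mu_le in Hj. lia.
  -
    assert (Hi := H1 _ (or_introl eq_refl)). simpl in Hi.
    go 0 ((Box p0 (Box p1 f) :: G, D0)) w; auto.
    + intros x [<-|Hx]; auto. simpl. intros u Hu v Hv. apply Hi. eauto.
    + apply step_same; simpl; auto.
  -
    assert (Hi := H2 _ (or_introl eq_refl)).
    assert (Hm := mu_F _ _ _ Hi). simpl in Hm.
    destruct Hm as [v [k [j [[u [n1 [n2 [Hd1 [Hd2 ->]]]]] [Hj Heq]]]]].
    go 0 ((G, Box p0 (Box p1 f) :: D0)) w; auto.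
    + intros x [<-|Hx]; auto. apply F_sat.
      exists (n1 + (n2 + j)), u, n1, (n2 + j); repeat split; auto.
      exists v, n2, j; auto.
    + intros x y Hx Hy [->|[-> ->]]; [split; auto; simpl; tauto|]. split; [|simpl; tauto].
      rewrite Heq. apply mu_le. simpl.
      exists u, n1, (n2 + j); repeat split; auto; [exists v, n2, j; auto| lia].
  -
    assert (Hi := H1 _ (or_introl eq_refl)). simpl in Hi.
    go 0 ((Box p0 f :: Box p1 f :: G, D0)) w; auto.
    + intros x [<-|[<-|Hx]]; auto; simpl; intros v Hv; apply Hi; auto.
    + apply step_same; simpl; auto.
  -
    assert (Hi := H2 _ (or_introl eq_refl)).
    assert (Hm := mu_F _ _ _ Hi). simpl in Hm.
    destruct Hm as [v [k [j [[Hd|Hd] [Hj Heq]]]]].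
    + go 0 ((G, Box p0 f :: D0)) w; auto.
      * intros x [<-|Hx]; auto. apply F_sat. exists (k + j), v, k, j; auto.
      * intros x y Hx Hy [->|[-> ->]]; [split; auto; simpl; tauto|]. split; [|simpl; tauto].
        rewrite Heq. apply mu_le. simpl. exists v, k, j; auto.
    + go 1 ((G, Box p1 f :: D0)) w; auto.
      * intros x [<-|Hx]; auto. apply F_sat. exists (k + j), v, k, j; auto.
      * intros x y Hx Hy [->|[-> ->]]; [split; auto; simpl; tauto|]. split; [|simpl; tauto].
        rewrite Heq. apply mu_le. simpl. exists v, k, j; auto.
  -
    assert (Hi := H1 _ (or_introl eq_refl)). simpl in Hi.
    go 0 ((f :: Box p (Box (Star p) f) :: G, D0)) w; auto.
    + intros x [<-|[<-|Hx]]; auto.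
      * apply Hi, rt_refl.
      * simpl. intros u Hu v Hv. apply Hi. eapply rt_trans; [apply rt_step|]; eauto.
    + apply step_same; simpl; auto.
  -
    assert (Hi := H1 _ (or_introl eq_refl)). simpl in Hi.
    destruct (classic (sat M w f)) as [Hf|Hf].
    + go 1 ((g :: G, D0)) w; auto.
      * intros x [<-|Hx]; auto.
      * apply step_same; simpl; auto.
    + go 0 ((G, f :: D0)) w; auto.
      * intros x [<-|Hx]; auto.
      * apply step_same; simpl; auto.
  -
    assert (Hi := H2 _ (or_introl eq_refl)).
    assert (Hm := mu_F _ _ _ Hi). simpl in Hm.
    destruct Hm as [v [k [j [[<- [Hf ->]] [Hj Heq]]]]].
    go 0 ((f :: G, g :: D0)) w; auto.
    + intros x [<-|Hx]; auto.
    + intros x [<-|Hx]; auto. eapply F_nsat; eauto.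
    + intros x y Hx Hy [->|[-> ->]]; [split; auto; simpl; tauto|]. split; [|simpl; tauto].
      rewrite Heq. apply mu_le in Hj. lia.
  - destruct Hr as [[]|[]].
  -
    assert (Hi := H2 _ (or_introl eq_refl)).
    assert (Hm := mu_F _ _ _ Hi). simpl in Hm.
    destruct Hm as [v [k [j [Hd [Hj Heq]]]]].
    destruct Hd as [w0|w0 u v k1 k2 Hd1 Hd2].
    + go 0 ((G, f :: D0)) w0; auto.
      * intros x [<-|Hx]; auto. eapply F_nsat; eauto.
      * intros x y Hx Hy [->|[-> ->]]; [split; auto; intros [Hk _]; discriminate|].
        split; [|intros [Hk _]; discriminate]. rewrite Heq. apply mu_le in Hj. lia.
    + go 1 ((G, Box p (Box (Star p) f) :: D0)) w0; auto.
      * intros x [<-|Hx]; auto. apply F_sat.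
        exists (k1 + (k2 + j)), u, k1, (k2 + j); repeat split; auto. exists v, k2, j; auto.
      * assert (Hlt : mu M (Box p (Box (Star p) f)) w0 < mu M (Box (Star p) f) w0).
        { rewrite Heq. eapply Nat.le_lt_trans; [apply mu_le|]. simpl.
          exists u, k1, (k2 + j); repeat split; auto. exists v, k2, j; auto. lia. }
        intros x y Hx Hy [->|[-> ->]]; [split; auto; intros [_ [Hx1 Hy1]]; subst; exfalso; injection Hy1 as _ Hy1; exact (box_neq _ _ (eq_sym Hy1))|].
        split; auto; lia.
Qed.

End Sem.

Section Cyc.
Variables P A : Type.
Notation form := (form P A).
Notation prog := (prog P A).
Notation model := (model P A).

Lemma seteq_sym (l1 l2 : list form) : seteq l1 l2 -> seteq l2 l1.
Proof. intros H x; split; apply H. Qed.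
Lemma seteq_trans (l1 l2 l3 : list form) : seteq l1 l2 -> seteq l2 l3 -> seteq l1 l3.
Proof. intros H1 H2 x; split; intro; [apply H2, H1|apply H1, H2]; auto. Qed.
Lemma seqeq_sym (s1 s2 : sequent P A) : seqeq s1 s2 -> seqeq s2 s1.
Proof. intros [H1 H2]; split; apply seteq_sym; auto. Qed.
Lemma seqeq_trans (s1 s2 s3 : sequent P A) : seqeq s1 s2 -> seqeq s2 s3 -> seqeq s1 s3.
Proof. intros [H1 H2] [H3 H4]; split; eapply seteq_trans; eauto. Qed.
Lemma seqeq_refl (s : sequent P A) : seqeq s s.
Proof. split; intro; tauto. Qed.

Lemma subtree_app (t : ptree P A) a b :
  subtree t (a ++ b) = match subtree t a with Some t1 => subtree t1 b | None => None end.
Proof.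
  revert t; induction a as [|k a IH]; intro t; simpl; auto.
  destruct t as [s r ts|s c]; auto.
  destruct (nth_error ts k); auto.
Qed.

Variable t : ptree P A.
Variable M : model.
Hypothesis Hpre : preproof t.

Definition Inv (aw : list nat * mW M) : Prop :=
  exists s r ts, subtree t (fst aw) = Some (PNode s r ts) /\ falsif P A M (snd aw) s.

Definition Rel (aw : list nat * mW M) (kb : nat * (list nat * mW M)) : Prop :=
  edge t (fst aw) (fst kb) (fst (snd kb)) /\ Inv (snd kb) /\
  forall s r ts s2 r2 ts2, subtree t (fst aw) = Some (PNode s r ts) ->
    subtree t (fst (snd kb)) = Some (PNode s2 r2 ts2) ->
    forall x y, In x (snd s) -> In y (snd s2) -> tstep r (fst kb) x y ->
      mu P A M y (snd (snd kb)) <= mu P A M x (snd aw) /\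
      (progress r (fst kb) x y -> mu P A M y (snd (snd kb)) < mu P A M x (snd aw)).

Lemma step_ex aw : Inv aw -> exists kb, Rel aw kb.
Proof.
  destruct aw as [a w]. intros [s [r [ts [Hsub Hf]]]]. simpl in *.
  destruct Hpre as [Hn Hb].
  destruct (Hn _ _ _ _ Hsub) as [Hr [Hs [Heq [Hlen Hch]]]].
  apply (falsif_seqeq P A M w _ _ Heq) in Hf.
  destruct (rule_step P A r M w Hr Hs Hf) as [k [s' [w' [Hk [Hf' Hst]]]]].
  assert (Hk' : exists t', nth_error ts k = Some t').
  { destruct (nth_error ts k) eqn:E; eauto. apply nth_error_None in E.
    assert (nth_error (prems r) k <> None) by congruence.
    apply nth_error_Some in H. lia. }
  destruct Hk' as [t' Ht'].
  assert (Hl := Hch _ _ _ Ht' Hk).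
  assert (Hsub' : subtree t (a ++ [k]) = Some t').
  { rewrite subtree_app, Hsub. simpl. rewrite Ht'. auto. }
  destruct t' as [s1 r1 ts1|s1 c].
  - exists (k, (a ++ [k], w')). split; [|split].
    + exists s, r, ts, (PNode s1 r1 ts1); simpl; auto.
    + exists s1, r1, ts1; split; auto. simpl. eapply falsif_seqeq; [apply seqeq_sym, Hl|]; auto.
    + simpl. intros s0 r0 ts0 s2 r2 ts2 E1 E2 x y Hx Hy Ht.
      rewrite Hsub in E1; injection E1 as <- <- <-.
      rewrite Hsub' in E2; injection E2 as <- <- <-.
      apply Hst; auto. apply Heq; auto. apply Hl; auto.
  - destruct (Hb _ _ _ Hsub') as [s'' [r'' [ts'' [Hc Hq]]]].
    exists (k, (c, w')). split; [|split].
    + exists s, r, ts, (PBud s1 c); simpl; auto.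
    + exists s'', r'', ts''; split; auto. simpl.
      eapply falsif_seqeq; [|exact Hf']. eapply seqeq_trans; [apply seqeq_sym, Hl|exact Hq].
    + simpl. intros s0 r0 ts0 s2 r2 ts2 E1 E2 x y Hx Hy Ht.
      rewrite Hsub in E1; injection E1 as <- <- <-.
      rewrite Hc in E2; injection E2 as <- <- <-.
      apply Hst; auto. apply Heq; auto. apply Hl, Hq; auto.
Qed.

Definition X := { aw : list nat * mW M | Inv aw }.

Lemma step_sig (x : X) : { p : nat * X | Rel (proj1_sig x) (fst p, proj1_sig (snd p)) }.
Proof.
  destruct x as [aw H].
  destruct (constructive_indefinite_description _ (step_ex aw H)) as [[k b] Hkb].
  assert (Hb : Inv b) by apply Hkb.
  exists (k, exist _ b Hb). simpl. exact Hkb.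
Qed.

Definition nxt (x : X) : nat * X := proj1_sig (step_sig x).

Hypothesis Hgtc : global_trace_condition t.

Lemma no_falsif_root w : ~ Inv ([], w).
Proof.
  intro H0.
  set (sq := fun i => Nat.iter i (fun x => snd (nxt x)) (exist _ ([], w) H0 : X)).
  set (pth := fun i => fst (proj1_sig (sq i))).
  set (ks := fun i => fst (nxt (sq i))).
  set (wd := fun i => snd (proj1_sig (sq i))).
  assert (HR : forall i, Rel (proj1_sig (sq i)) (ks i, proj1_sig (sq (S i)))).
  { intro i. unfold ks. change (sq (S i)) with (snd (nxt (sq i))).
    unfold nxt. destruct (step_sig (sq i)) as [p Hp]. exact Hp. }
  assert (HE : forall i, edge t (pth i) (ks i) (pth (S i))) by (intro i; apply (HR i)).
  destruct (Hgtc pth ks HE) as [n [tau [H1 H2]]].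
  set (a := fun i => mu P A M (tau i) (wd i)).
  assert (Hmono : forall i, n <= i -> a (S i) <= a i /\
      forall s r ts, subtree t (pth i) = Some (PNode s r ts) ->
        progress r (ks i) (tau i) (tau (S i)) -> a (S i) < a i).
  { intros i Hi. destruct (H1 i Hi) as [s [r [ts [E1 [Hx Ht]]]]].
    destruct (H1 (S i) ltac:(lia)) as [s2 [r2 [ts2 [E2 [Hy _]]]]].
    destruct (HR i) as [_ [_ Hst]].
    destruct (Hst s r ts s2 r2 ts2 E1 E2 _ _ Hx Hy Ht) as [Hle Hlt].
    split; [exact Hle|]. intros s' r' ts' E' Hp. rewrite E1 in E'. injection E' as <- <- <-.
    apply Hlt, Hp. }
  assert (Hmono2 : forall d i, n <= i -> a (d + i) <= a i).
  { induction d; intros i Hi; simpl; auto.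
    eapply Nat.le_trans; [apply Hmono; lia|]. apply IHd; auto. }
  assert (Hdec : forall m, exists i, n <= i /\ a i + m <= a n).
  { induction m.
    - exists n; split; lia.
    - destruct IHm as [i [Hi Ha]].
      destruct (H2 i) as [j [Hij [Hnj [s [r [ts [E Hp]]]]]]].
      exists (S j); split; [lia|].
      assert (a (S j) < a j) by (apply (proj2 (Hmono j Hnj)) with s r ts; auto).
      assert (a j <= a i) by (replace j with ((j - i) + i) by lia; apply Hmono2; auto).
      lia. }
  destruct (Hdec (S (a n))) as [i [_ Hi]]. lia.
Qed.

End Cyc.

Lemma csound P A (s : sequent P A) : cprovable s -> valid s.
Proof.
  intros [t [Hpre [Hgtc Hl]]]. apply valid_falsif. intros M w Hf.
  destruct t as [s0 r ts|s0 c].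
  - apply (no_falsif_root P A (PNode s0 r ts) M Hpre Hgtc w).
    exists s0, r, ts; split; auto. simpl. eapply falsif_seqeq; [apply seqeq_sym, Hl|]; auto.
  - destruct Hpre as [_ Hb]. destruct (Hb [] s0 c eq_refl) as [s' [r' [ts' [E _]]]].
    destruct c; simpl in E; discriminate.
Qed.

Section GS.
Variables P A : Type.
Notation form := (form P A).
Notation prog := (prog P A).
Notation model := (model P A).

Lemma starR_step M (G : list form) p f w :
  falsif P A M w (f :: map (Box (Star p)) G, [Box (Star p) f]) ->
  exists u, falsif P A M u (f :: G, [Box p f]).
Proof.
  intros [H1 H2]. simpl in *.
  assert (Hf : sat M w f) by auto.
  assert (Hs : forall g, In g G -> sat M w (Box (Star p) g)) by (intros; apply H1; right; apply in_map; auto).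
  assert (Hn := H2 _ (or_introl eq_refl)). simpl in Hn.
  apply not_all_ex_not in Hn as [v Hv]. apply imply_to_and in Hv as [Hr Hv].
  apply clos_rt_rt1n in Hr. clear H1 H2.
  induction Hr as [w|w u' v Hwu Hr IH].
  - contradiction.
  - destruct (classic (sat M u' f)) as [Hu|Hu].
    + apply IH; auto. intros g Hg. simpl. intros x Hx. apply (Hs g Hg).
      eapply rt_trans; [apply rt_step; exact Hwu|exact Hx].
    + exists w. split; simpl.
      * intros x [<-|Hx]; auto. apply (Hs x Hx). apply rt_refl.
      * intros x [<-|[]]. simpl. intro H. apply Hu, H, Hwu.
Qed.

Lemma gsound (s : sequent P A) : gprovable s -> valid s.
Proof.
  induction 1 as [r s Hr Hs Heq Hp IH].
  apply valid_falsif. intros M w Hf.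
  apply (falsif_seqeq P A M w _ _ Heq) in Hf.
  destruct Hr as [Hc|Hc].
  - assert (Hr : cgtpdl_rule r) by (left; auto).
    destruct (rule_step P A r M w Hr Hs Hf) as [k [s' [w' [Hk [Hf' _]]]]].
    apply nth_error_In in Hk. apply (proj1 (valid_falsif P A s') (IH s' Hk) M w' Hf').
  - destruct r; try contradiction. simpl in Hf.
    destruct (starR_step M G p f w Hf) as [u Hu].
    apply (proj1 (valid_falsif P A _) (IH _ (or_introl eq_refl)) M u Hu).
Qed.
End GS.

Section Tr.
Variables P A : Type.
Notation form := (form P A).
Notation prog := (prog P A).
Notation ptree := (ptree P A).

Fixpoint shift (pre : list nat) (t : ptree) : ptree :=
  match t with
  | PNode s r ts => PNode s r (map (shift pre) ts)
  | PBud s c => PBud s (pre ++ c)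
  end.

Lemma label_shift pre t : label (shift pre t) = label t.
Proof. destruct t; auto. Qed.

Lemma subtree_shift pre a : forall t, subtree (shift pre t) a = option_map (shift pre) (subtree t a).
Proof.
  induction a as [|k a IH]; intro t; simpl; auto.
  destruct t as [s r ts|s c]; simpl; auto.
  rewrite nth_error_map. destruct (nth_error ts k); simpl; auto.
Qed.

Lemma edge_shift (T t : ptree) pre :
  subtree T pre = Some (shift pre t) ->
  forall a k b, edge T (pre ++ a) k b -> exists b', b = pre ++ b' /\ edge t a k b'.
Proof.
  intros HT a k b [s [r [ts [t1 [H1 [H2 H3]]]]]].
  rewrite subtree_app, HT, subtree_shift in H1.
  destruct (subtree t a) as [[s' r' ts'|s' c']|] eqn:E; simpl in H1; try discriminate.
  injection H1 as <- <- <-. rewrite nth_error_map in H2.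
  destruct (nth_error ts' k) as [t2|] eqn:E2; simpl in H2; try discriminate.
  injection H2 as <-. destruct t2 as [s2 r2 ts2|s2 c2]; simpl in H3.
  - exists (a ++ [k]); split; [subst; rewrite app_assoc; auto|].
    exists s', r', ts', (PNode s2 r2 ts2); auto.
  - exists c2; split; auto. exists s', r', ts', (PBud s2 c2); auto.
Qed.

Definition good (t : ptree) := preproof t /\ global_trace_condition t.

Lemma good_root t : good t -> exists s r ts, t = PNode s r ts.
Proof.
  intros [[_ Hb] _]. destruct t as [s r ts|s c]; eauto.
  destruct (Hb [] s c eq_refl) as [? [? [? [E _]]]]. destruct c; discriminate.
Qed.

Lemma region_stay (T t : ptree) pre (pth : nat -> list nat) ks :
  subtree T pre = Some (shift pre t) ->
  (forall i, edge T (pth i) (ks i) (pth (S i))) ->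
  forall i0 q, pth i0 = pre ++ q -> forall d, exists q', pth (d + i0) = pre ++ q'.
Proof.
  intros HT HE i0 q Hq d. induction d as [|d [q' Hq']]; simpl; eauto.
  assert (He := HE (d + i0)). rewrite Hq' in He.
  destruct (edge_shift T t pre HT _ _ _ He) as [b' [Hb _]]. eauto.
Qed.

Lemma gtc_region (T t : ptree) pre (pth : nat -> list nat) ks i0 :
  subtree T pre = Some (shift pre t) -> global_trace_condition t ->
  (forall i, edge T (pth i) (ks i) (pth (S i))) ->
  (exists q, pth i0 = pre ++ q) ->
  exists (n : nat) (tau : nat -> form),
      (forall i, n <= i -> exists s r ts,
          subtree T (pth i) = Some (PNode s r ts) /\
          In (tau i) (snd s) /\ tstep r (ks i) (tau i) (tau (S i))) /\
      (forall m, exists i, m <= i /\ n <= i /\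
          exists s r ts, subtree T (pth i) = Some (PNode s r ts) /\
            progress r (ks i) (tau i) (tau (S i))).
Proof.
  intros HT Hg HE [q Hq].
  assert (Hr := region_stay T t pre pth ks HT HE i0 q Hq).
  set (qq := fun d => skipn (length pre) (pth (d + i0))).
  assert (Hqq : forall d, pth (d + i0) = pre ++ qq d).
  { intro d. destruct (Hr d) as [q' Hq']. unfold qq. rewrite Hq'.
    rewrite skipn_app, skipn_all, Nat.sub_diag. simpl. auto. }
  assert (HE' : forall d, edge t (qq d) (ks (d + i0)) (qq (S d))).
  { intro d. assert (He := HE (d + i0)). rewrite Hqq in He.
    destruct (edge_shift T t pre HT _ _ _ He) as [b' [Hb He']].
    replace (qq (S d)) with b'; auto.
    assert (pth (S d + i0) = pre ++ b') by (simpl; auto).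
    rewrite Hqq in H. apply app_inv_head in H. auto. }
  destruct (Hg qq (fun d => ks (d + i0)) HE') as [n [tau [H1 H2]]].
  assert (Hsub : forall d s r ts, subtree t (qq d) = Some (PNode s r ts) ->
            subtree T (pth (d + i0)) = Some (PNode s r (map (shift pre) ts))).
  { intros d s r ts E. rewrite Hqq, subtree_app, HT, subtree_shift, E. auto. }
  exists (n + i0), (fun i => tau (i - i0)). split.
  - intros i Hi. destruct (H1 (i - i0) ltac:(lia)) as [s [r [ts [E [Hin Hst]]]]].
    apply Hsub in E. replace (i - i0 + i0) with i in E by lia.
    exists s, r, (map (shift pre) ts); split; auto. split; auto.
    replace (S i - i0) with (S (i - i0)) by lia.
    replace (ks i) with (ks (i - i0 + i0)) by (f_equal; lia). auto.
  - intro m. destruct (H2 m) as [d [Hd1 [Hd2 [s [r [ts [E Hp]]]]]]].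
    exists (d + i0). split; [lia|]. split; [lia|].
    exists s, r, (map (shift pre) ts). split; [apply Hsub; auto|].
    replace (d + i0 - i0) with d by lia. replace (S (d + i0) - i0) with (S d) by lia. auto.
Qed.

Fixpoint shifti (n : nat) (ts : list ptree) : list ptree :=
  match ts with [] => [] | t :: ts => shift [n] t :: shifti (S n) ts end.

Lemma shifti_nth ts : forall n k, nth_error (shifti n ts) k = option_map (shift [n + k]) (nth_error ts k).
Proof.
  induction ts as [|t ts IH]; intros n k; simpl; [destruct k; auto|].
  destruct k; simpl. rewrite Nat.add_0_r; auto. rewrite IH. f_equal. f_equal. f_equal. lia.
Qed.

Lemma shifti_len ts : forall n, length (shifti n ts) = length ts.
Proof. induction ts; simpl; auto. Qed.

Lemma F2_nth {X Y : Type} (R : X -> Y -> Prop) l1 l2 :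
  Forall2 R l1 l2 -> forall k x, nth_error l1 k = Some x -> exists y, nth_error l2 k = Some y /\ R x y.
Proof.
  induction 1; intros k x0 Hk; [destruct k; discriminate|].
  destruct k; simpl in *; [injection Hk as <-; eauto|eauto].
Qed.

Lemma node_good (r : rule P A) s (ts : list ptree) :
  cgtpdl_rule r -> side r -> seqeq s (concl r) ->
  Forall2 (fun t s' => good t /\ seqeq (label t) s') ts (prems r) ->
  good (PNode s r (shifti 0 ts)).
Proof.
  intros Hr Hs Heq HF.
  assert (Hlen := Forall2_length HF).
  assert (Hnth : forall k t, nth_error ts k = Some t -> good t /\
            exists s', nth_error (prems r) k = Some s' /\ seqeq (label t) s').
  { intros k t Hk. destruct (F2_nth _ _ _ HF _ _ Hk) as [s' [H1 [H2 H3]]]. eauto. }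
  assert (Hsub : forall k t, nth_error ts k = Some t ->
            subtree (PNode s r (shifti 0 ts)) [k] = Some (shift [k] t)).
  { intros k t Hk. simpl. rewrite shifti_nth, Hk. simpl. auto. }
  assert (Hsub2 : forall k a, subtree (PNode s r (shifti 0 ts)) (k :: a) =
            match nth_error ts k with Some t => option_map (shift [k]) (subtree t a) | None => None end).
  { intros k a. simpl. rewrite shifti_nth. destruct (nth_error ts k); simpl; auto.
    apply subtree_shift. }
  split; [split|].
  - intros a s0 r0 ts0 E. destruct a as [|k a].
    + simpl in E. injection E as <- <- <-. split; [auto|split; [auto|split; [auto|split]]].
      * rewrite shifti_len; auto.
      * intros k t' s' E1 E2. rewrite shifti_nth in E1.
        destruct (nth_error ts k) as [t1|] eqn:E3; simpl in E1; try discriminate.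
        injection E1 as <-. rewrite label_shift.
        destruct (Hnth _ _ E3) as [_ [s'' [E4 E5]]]. rewrite E2 in E4. injection E4 as <-. auto.
    + rewrite Hsub2 in E. destruct (nth_error ts k) as [t1|] eqn:E3; try discriminate.
      destruct (subtree t1 a) as [[s1 r1 ts1|s1 c1]|] eqn:E4; simpl in E; try discriminate.
      injection E as <- <- <-.
      destruct (Hnth _ _ E3) as [[[Hn _] _] _].
      destruct (Hn _ _ _ _ E4) as [H1 [H2 [H3 [H4 H5]]]]. split; [auto|split; [auto|split; [auto|split]]].
      * rewrite length_map; auto.
      * intros k' t' s' E1 E2. rewrite nth_error_map in E1.
        destruct (nth_error ts1 k') as [t2|] eqn:E5; simpl in E1; try discriminate.
        injection E1 as <-. rewrite label_shift. eapply H5; eauto.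
  - intros a s0 c E. destruct a as [|k a]; [discriminate|].
    rewrite Hsub2 in E. destruct (nth_error ts k) as [t1|] eqn:E3; try discriminate.
    destruct (subtree t1 a) as [[s1 r1 ts1|s1 c1]|] eqn:E4; simpl in E; try discriminate.
    injection E as <- <-.
    destruct (Hnth _ _ E3) as [[[_ Hb] _] _].
    destruct (Hb _ _ _ E4) as [s' [r' [ts' [E5 E6]]]].
    exists s', r', (map (shift [k]) ts'). split; auto.
    change ([k] ++ c1) with (k :: c1). rewrite Hsub2, E3, E5. auto.
  - intros pth ks HE.
    assert (Hj : exists j t, nth_error ts j = Some t /\ exists q, pth 1 = [j] ++ q).
    { destruct (pth 0) as [|j a] eqn:E0.
      - destruct (HE 0) as [s0 [r0 [ts0 [t' [E1 [E2 E3]]]]]]. rewrite E0 in E1.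
        simpl in E1. injection E1 as <- <- <-. rewrite shifti_nth in E2.
        destruct (nth_error ts (ks 0)) as [t1|] eqn:E4; simpl in E2; try discriminate.
        injection E2 as <-. destruct (Hnth _ _ E4) as [Hg _].
        destruct (good_root _ Hg) as [s1 [r1 [ts1 ->]]]. simpl in E3.
        exists (ks 0), (PNode s1 r1 ts1). split; auto. exists []. rewrite E3, E0. auto.
      - destruct (HE 0) as [s0 [r0 [ts0 [t' [E1 _]]]]]. rewrite E0, Hsub2 in E1.
        destruct (nth_error ts j) as [t1|] eqn:E4; try discriminate.
        exists j, t1. split; auto.
        assert (He := HE 0). rewrite E0 in He. change (j :: a) with ([j] ++ a) in He.
        destruct (edge_shift _ t1 [j] (Hsub _ _ E4) _ _ _ He) as [b' [Hb _]]. eauto. }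
    destruct Hj as [j [t1 [E1 Hq]]].
    destruct (Hnth _ _ E1) as [[_ Hg] _].
    exact (gtc_region _ t1 [j] pth ks 1 (Hsub _ _ E1) Hg HE Hq).
Qed.

End Tr.

Section Star.
Variables P A : Type.
Notation form := (form P A).
Notation prog := (prog P A).
Notation ptree := (ptree P A).
Variable p : prog.
Variable f : form.
Variable t' : ptree.
Notation bs := (Box (Star p) f).

Definition Tstar : ptree :=
 PNode ([f],[bs]) (RCs [f] [] p f)
  [ PNode ([f],[f]) (RAx [f] [f]) [];
    PNode ([f],[Box p bs]) (RCut [f] [Box p bs] (Box p f))
      [ PNode ([f],[Box p f; Box p bs]) (RWk [f] [Box p f] [f] [Box p f; Box p bs]) [shift P A [1;0;0] t'];
        PNode ([Box p f; f],[Box p bs]) (RWk [Box p f] [Box p bs] [Box p f; f] [Box p bs])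
          [ PNode ([Box p f],[Box p bs]) (RBox [f] [] p bs) [PBud ([f],[bs]) []] ] ] ].

Ltac fin := solve [repeat (first [left; reflexivity| right]); reflexivity].

Lemma addr_cases a x : subtree Tstar a = Some x ->
  a = [] \/ a = [0] \/ a = [1] \/ a = [1;0] \/ (exists a', a = [1;0;0] ++ a') \/
  a = [1;1] \/ a = [1;1;0] \/ a = [1;1;0;0].
Proof.
  intro E. destruct a as [|n0 a]; [fin|]. destruct n0 as [|[|n0]]; simpl in E.
  - destruct a as [|n1 a]; [fin|]. simpl in E. destruct n1; discriminate.
  - destruct a as [|n1 a]; [fin|]. destruct n1 as [|[|n1]]; simpl in E.
    + destruct a as [|n2 a]; [fin|]. destruct n2 as [|n2]; simpl in E.
      * right; right; right; right; left. exists a. auto.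
      * destruct n2; discriminate.
    + destruct a as [|n2 a]; [fin|]. destruct n2 as [|n2]; simpl in E; [|destruct n2; discriminate].
      destruct a as [|n3 a]; [fin|]. destruct n3 as [|n3]; simpl in E; [|destruct n3; discriminate].
      destruct a; [fin|simpl in E; discriminate].
    + destruct n1; discriminate.
  - destruct n0; discriminate.
Qed.

Hypothesis Hg : good P A t'.
Hypothesis Hl : seqeq (label t') ([f],[Box p f]).

Lemma sub100 : subtree Tstar [1;0;0] = Some (shift P A [1;0;0] t').
Proof. reflexivity. Qed.

Lemma seqeq_r (s : sequent P A) : seqeq s s.
Proof. split; intro; tauto. Qed.

Lemma Tstar_pre : preproof Tstar.
Proof.
  destruct Hg as [[Hn Hb] _].
  split.
  - intros a s r ts E.
    destruct (addr_cases a _ E) as [->|[->|[->|[->|[[a' ->]|[->|[->| ->]]]]]]]; simpl in E;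
      try (injection E as <- <- <-).
    + split; [right; exact I|]. split; [exact I|]. split; [apply seqeq_r|]. split; [auto|].
      intros [|[|k]] t1 s1 E1 E2; simpl in *; try (destruct k; discriminate);
        injection E1 as <-; injection E2 as <-; apply seqeq_r.
    + split; [left; exact I|]. split; [exists f; simpl; auto|]. split; [apply seqeq_r|].
      split; [auto|]. intros [|k] t1 s1 E1 E2; simpl in *; try (destruct k; discriminate); discriminate.
    + split; [left; exact I|]. split; [exact I|]. split; [apply seqeq_r|]. split; [auto|].
      intros [|[|k]] t1 s1 E1 E2; simpl in *; try (destruct k; discriminate);
        injection E1 as <-; injection E2 as <-; apply seqeq_r.
    + split; [left; exact I|]. split; [split; intros x Hx; simpl in *; tauto|].
      split; [apply seqeq_r|]. split; [auto|].
      intros [|k] t1 s1 E1 E2; simpl in *; try (destruct k; discriminate).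
      injection E1 as <-; injection E2 as <-. rewrite label_shift. exact Hl.
    + rewrite subtree_shift in E.
      destruct (subtree t' a') as [[s1 r1 ts1|s1 c1]|] eqn:E4; simpl in E; try discriminate.
      injection E as <- <- <-.
      destruct (Hn _ _ _ _ E4) as [H1 [H2 [H3 [H4 H5]]]].
      split; [auto|split; [auto|split; [auto|split]]].
      * rewrite length_map; auto.
      * intros k' t2 s' E1 E2. rewrite nth_error_map in E1.
        destruct (nth_error ts1 k') as [t3|] eqn:E5; simpl in E1; try discriminate.
        injection E1 as <-. rewrite label_shift. eapply H5; eauto.
    + split; [left; exact I|]. split; [split; intros x Hx; simpl in *; tauto|].
      split; [apply seqeq_r|]. split; [auto|].
      intros [|k] t1 s1 E1 E2; simpl in *; try (destruct k; discriminate).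
      injection E1 as <-; injection E2 as <-. apply seqeq_r.
    + split; [left; exact I|]. split; [exact I|]. split; [apply seqeq_r|]. split; [auto|].
      intros [|k] t1 s1 E1 E2; simpl in *; try (destruct k; discriminate).
      injection E1 as <-; injection E2 as <-. apply seqeq_r.
    + discriminate.
  - intros a s c E.
    destruct (addr_cases a _ E) as [->|[->|[->|[->|[[a' ->]|[->|[->| ->]]]]]]]; simpl in E;
      try discriminate.
    + rewrite subtree_shift in E.
      destruct (subtree t' a') as [[s1 r1 ts1|s1 c1]|] eqn:E4; simpl in E; try discriminate.
      injection E as <- <-.
      destruct (Hb _ _ _ E4) as [s' [r' [ts' [E5 E6]]]].
      exists s', r', (map (shift P A [1;0;0]) ts'). split; auto.
      simpl. rewrite subtree_shift, E5. auto.
    + injection E as <- <-. exists ([f],[bs]), (RCs [f] [] p f). eexists. split; [reflexivity|apply seqeq_r].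
Qed.

Lemma Tstar_gtc : global_trace_condition Tstar.
Proof.
  destruct Hg as [_ Hgt].
  intros pth ks HE.
  destruct (classic (exists i0 q, pth i0 = [1;0;0] ++ q)) as [[i0 Hq]|Hno].
  - exact (gtc_region P A Tstar t' [1;0;0] pth ks i0 sub100 Hgt HE Hq).
  - assert (Hc : forall i, (pth i = [] /\ ks i = 1 /\ pth (S i) = [1]) \/
                        (pth i = [1] /\ ks i = 1 /\ pth (S i) = [1;1]) \/
                        (pth i = [1;1] /\ ks i = 0 /\ pth (S i) = [1;1;0]) \/
                        (pth i = [1;1;0] /\ ks i = 0 /\ pth (S i) = [])).
    { intro i. destruct (HE i) as [s [r [ts [t1 [E1 [E2 E3]]]]]].
      destruct (addr_cases _ _ E1) as [Ea|[Ea|[Ea|[Ea|[[a' Ea]|[Ea|[Ea|Ea]]]]]]];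
        rewrite Ea in E1; try rewrite Ea in E3; simpl in E1; try (injection E1 as <- <- <-).
      - destruct (ks i) as [|[|k]] eqn:Ek; simpl in E2; try (destruct k; discriminate); injection E2 as <-.
        + exfalso. subst. destruct (HE (S i)) as [? [? [? [? [E4 [E5 _]]]]]].
          rewrite E3 in E4. simpl in E4. injection E4 as <- <- <-. destruct (ks (S i)); simpl in E5; discriminate.
        + left. auto.
      - destruct (ks i); discriminate.
      - destruct (ks i) as [|[|k]] eqn:Ek; simpl in E2; try (destruct k; discriminate); injection E2 as <-.
        + exfalso. apply Hno. exists (S (S i)), [].
          destruct (HE (S i)) as [? [? [? [? [E4 [E5 E6]]]]]].
          rewrite E3 in E4. simpl in E4. injection E4 as <- <- <-.
          destruct (ks (S i)) as [|k]; simpl in E5; [|destruct k; discriminate]. injection E5 as <-.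
          destruct (good_root P A _ Hg) as [s5 [r5 [ts5 E7]]]. rewrite E7 in E6. simpl in E6. rewrite E6, E3. reflexivity.
        + right; left. auto.
      - exfalso. apply Hno. exists (S i), []. 
        destruct (ks i) as [|k]; simpl in E2; try (destruct k; discriminate). injection E2 as <-.
        destruct (good_root P A _ Hg) as [s5 [r5 [ts5 E7]]]. rewrite E7 in E3. simpl in E3. rewrite E3; try rewrite Ea; reflexivity.
      - exfalso. apply Hno. eauto.
      - destruct (ks i) as [|k] eqn:Ek; simpl in E2; try (destruct k; discriminate).
        injection E2 as <-. right; right; left. auto.
      - destruct (ks i) as [|k] eqn:Ek; simpl in E2; try (destruct k; discriminate).
        injection E2 as <-. right; right; right. auto.
      - discriminate. }
    exists 0, (fun i => match pth i with [] => bs | _ => Box p bs end). split.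
    + intros i _. destruct (Hc i) as [[E1 [E2 E3]]|[[E1 [E2 E3]]|[[E1 [E2 E3]]|[E1 [E2 E3]]]]];
        rewrite E1, E2, E3; simpl; eexists; eexists; eexists; split; try reflexivity; simpl; auto.
    + intro m.
      assert (Hz : exists i, m <= i /\ pth i = []).
      { destruct (Hc m) as [[E1 [E2 E3]]|[[E1 [E2 E3]]|[[E1 [E2 E3]]|[E1 [E2 E3]]]]].
        - eauto.
        - exists (S (S (S m))). split; [lia|].
          destruct (Hc (S m)) as [[? [? ?]]|[[? [? ?]]|[[? [? ?]]|[? [? ?]]]]]; try congruence.
          destruct (Hc (S (S m))) as [[? [? ?]]|[[? [? ?]]|[[? [? ?]]|[? [? ?]]]]]; try congruence.
        - exists (S (S m)). split; [lia|].
          destruct (Hc (S m)) as [[? [? ?]]|[[? [? ?]]|[[? [? ?]]|[? [? ?]]]]]; try congruence.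
        - exists (S m). split; [lia|]. auto. }
      destruct Hz as [i [Hi Ez]]. exists i. split; auto. split; [lia|].
      destruct (Hc i) as [[E1 [E2 E3]]|[[E1 [E2 E3]]|[[E1 [E2 E3]]|[E1 [E2 E3]]]]]; try congruence.
      rewrite E1, E2, E3. simpl. eexists; eexists; eexists; split; [reflexivity|]. simpl. auto.
Qed.

Lemma Tstar_good : good P A Tstar.
Proof. split; [apply Tstar_pre|apply Tstar_gtc]. Qed.

End Star.

Section Prov.
Variables P A : Type.
Notation form := (form P A).
Notation prog := (prog P A).
Notation ptree := (ptree P A).

Inductive prov : sequent P A -> Prop :=
| pr_node (r : rule P A) s : common_rule r -> side r -> seqeq s (concl r) ->
    (forall s', In s' (prems r) -> prov s') -> prov s
| pr_star (p : prog) (f : form) s : seqeq s ([f], [Box (Star p) f]) ->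
    prov ([f], [Box p f]) -> prov s.

Lemma prov_g s : prov s -> gprovable s.
Proof.
  induction 1.
  - eapply gp_node; eauto. left; auto.
  - apply gp_node with (RStarR [] p f).
    + right; exact I.
    + exact I.
    + exact H.
    + simpl. intros s' [<-|[]]; auto.
Qed.

Lemma list_choice (l : list (sequent P A)) :
  (forall s', In s' l -> exists t, good P A t /\ seqeq (label t) s') ->
  exists ts, Forall2 (fun t s' => good P A t /\ seqeq (label t) s') ts l.
Proof.
  induction l as [|x l IH]; intro H.
  - exists []; constructor.
  - destruct (H x (or_introl eq_refl)) as [t Ht].
    destruct IH as [ts Hts]; [intros; apply H; right; auto|].
    exists (t :: ts); constructor; auto.
Qed.

Lemma prov_good s : prov s -> exists t, good P A t /\ seqeq (label t) s.
Proof.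
  induction 1 as [r s Hr Hs Heq Hp IH|p f s Heq Hp IH].
  - destruct (list_choice _ IH) as [ts Hts].
    exists (PNode s r (shifti P A 0 ts)). split; [|apply seqeq_refl].
    apply node_good; auto. left; auto.
  - destruct IH as [t [Hg Hl]].
    exists (Tstar P A p f t). split; [apply Tstar_good; auto|].
    simpl. apply seqeq_sym; auto.
Qed.

Lemma prov_c s : prov s -> cprovable s.
Proof.
  intro H. destruct (prov_good s H) as [t [[H1 H2] H3]]. exists t; auto.
Qed.

End Prov.

Section Kit.
Variables P A : Type.
Notation form := (form P A).
Notation prog := (prog P A).
Notation Pv G D := (prov P A (G, D)).

Ltac inc := let z := fresh "z" in let H := fresh "Hz" in
  intros z H; repeat (progress (simpl in *) || rewrite in_app_iff in * ); intuition (subst; simpl; auto).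

Lemma seteq_cons (x : form) G : In x G -> seteq (x :: G) G.
Proof. intros H z; simpl; split; [intros [<-|Hz]; auto|auto]. Qed.
Lemma seteq_refl (G : list form) : seteq G G.
Proof. intro; tauto. Qed.

Lemma pv_wk G D G' D' : Pv G D -> incl G G' -> incl D D' -> Pv G' D'.
Proof.
  intros H H1 H2. apply pr_node with (RWk G D G' D'); simpl; auto.
  - split; apply seteq_refl.
  - intros s' [<-|[]]; auto.
Qed.

Lemma pv_ax f G D : In f G -> In f D -> Pv G D.
Proof.
  intros H1 H2. apply pr_node with (RAx G D); simpl; eauto.
  - split; apply seteq_refl.
  - intros s' [].
Qed.

Lemma pv_bot G D : In Bot G -> Pv G D.
Proof.
  intros H. apply pr_node with (RBot G D); simpl; auto.
  - split; [apply seteq_sym, seteq_cons; auto|apply seteq_refl].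
  - intros s' [].
Qed.

Lemma pv_cut f G D : Pv G (f :: D) -> Pv (f :: G) D -> Pv G D.
Proof.
  intros H1 H2. apply pr_node with (RCut G D f); simpl; auto.
  - split; apply seteq_refl.
  - intros s' [<-|[<-|[]]]; auto.
Qed.

Lemma pv_impL f g G D : In (Imp f g) G -> Pv G (f :: D) -> Pv (g :: G) D -> Pv G D.
Proof.
  intros H H1 H2. apply pr_node with (RImpL G D f g); simpl; auto.
  - split; [apply seteq_sym, seteq_cons; auto|apply seteq_refl].
  - intros s' [<-|[<-|[]]]; auto.
Qed.

Lemma pv_impR f g G D : In (Imp f g) D -> Pv (f :: G) (g :: D) -> Pv G D.
Proof.
  intros H H1. apply pr_node with (RImpR G D f g); simpl; auto.
  - split; [apply seteq_refl|apply seteq_sym, seteq_cons; auto].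
  - intros s' [<-|[]]; auto.
Qed.

Lemma pv_box p f G D : Pv G (f :: map (BoxC p) D) -> Pv (map (Box p) G) (Box p f :: D).
Proof.
  intros H. apply pr_node with (RBox G D p f); simpl; auto.
  - split; apply seteq_refl.
  - intros s' [<-|[]]; auto.
Qed.

Lemma pv_boxc p f G D : Pv G (f :: map (Box p) D) -> Pv (map (BoxC p) G) (BoxC p f :: D).
Proof.
  intros H. apply pr_node with (RBoxC G D p f); simpl; auto.
  - split; apply seteq_refl.
  - intros s' [<-|[]]; auto.
Qed.

Lemma pv_seqL p q f G D : In (Box (Seq p q) f) G -> Pv (Box p (Box q f) :: G) D -> Pv G D.
Proof.
  intros H H1. apply pr_node with (RSeqL G D p q f); simpl; auto.
  - split; [apply seteq_sym, seteq_cons; auto|apply seteq_refl].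
  - intros s' [<-|[]]; auto.
Qed.

Lemma pv_seqR p q f G D : In (Box (Seq p q) f) D -> Pv G (Box p (Box q f) :: D) -> Pv G D.
Proof.
  intros H H1. apply pr_node with (RSeqR G D p q f); simpl; auto.
  - split; [apply seteq_refl|apply seteq_sym, seteq_cons; auto].
  - intros s' [<-|[]]; auto.
Qed.

Lemma pv_cupL p q f G D : In (Box (Cup p q) f) G -> Pv (Box p f :: Box q f :: G) D -> Pv G D.
Proof.
  intros H H1. apply pr_node with (RCupL G D p q f); simpl; auto.
  - split; [apply seteq_sym, seteq_cons; auto|apply seteq_refl].
  - intros s' [<-|[]]; auto.
Qed.

Lemma pv_cupR p q f G D : In (Box (Cup p q) f) D -> Pv G (Box p f :: D) -> Pv G (Box q f :: D) -> Pv G D.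
Proof.
  intros H H1 H2. apply pr_node with (RCupR G D p q f); simpl; auto.
  - split; [apply seteq_refl|apply seteq_sym, seteq_cons; auto].
  - intros s' [<-|[<-|[]]]; auto.
Qed.

Lemma pv_starL p f G D : In (Box (Star p) f) G -> Pv (f :: Box p (Box (Star p) f) :: G) D -> Pv G D.
Proof.
  intros H H1. apply pr_node with (RStarL G D p f); simpl; auto.
  - split; [apply seteq_sym, seteq_cons; auto|apply seteq_refl].
  - intros s' [<-|[]]; auto.
Qed.

Lemma pv_testL f g G D : In (Box (Test f) g) G -> Pv G (f :: D) -> Pv (g :: G) D -> Pv G D.
Proof.
  intros H H1 H2. apply pr_node with (RTestL G D f g); simpl; auto.
  - split; [apply seteq_sym, seteq_cons; auto|apply seteq_refl].
  - intros s' [<-|[<-|[]]]; auto.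
Qed.

Lemma pv_testR f g G D : In (Box (Test f) g) D -> Pv (f :: G) (g :: D) -> Pv G D.
Proof.
  intros H H1. apply pr_node with (RTestR G D f g); simpl; auto.
  - split; [apply seteq_refl|apply seteq_sym, seteq_cons; auto].
  - intros s' [<-|[]]; auto.
Qed.

Lemma pv_star0 p f : Pv [f] [Box p f] -> Pv [f] [Box (Star p) f].
Proof. intro H. apply pr_star with p f; auto. split; apply seteq_refl. Qed.

Definition Neg (f : form) : form := Imp f Bot.

Lemma pv_negR f G D : Pv (f :: G) D -> Pv G (Neg f :: D).
Proof.
  intro H. apply pv_impR with f Bot; [left; auto|].
  eapply pv_wk; [exact H|inc|inc].
Qed.

Lemma pv_negL f G D : Pv G (f :: D) -> Pv (Neg f :: G) D.
Proof.
  intro H. apply pv_impL with f Bot; [left; auto| |].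
  - eapply pv_wk; [exact H|inc|inc].
  - apply pv_bot; left; auto.
Qed.

Lemma pv_negR_inv f G D : Pv G (Neg f :: D) -> Pv (f :: G) D.
Proof.
  intro H. apply pv_cut with (Neg f).
  - eapply pv_wk; [exact H|inc|inc].
  - apply pv_negL. apply pv_ax with f; simpl; auto.
Qed.

Lemma pv_negL_inv f G D : Pv (Neg f :: G) D -> Pv G (f :: D).
Proof.
  intro H. apply pv_cut with (Neg f).
  - apply pv_negR. apply pv_ax with f; simpl; auto.
  - eapply pv_wk; [exact H|inc|inc].
Qed.

Lemma pv_impR_inv f g G D : Pv G (Imp f g :: D) -> Pv (f :: G) (g :: D).
Proof.
  intro H. apply pv_cut with (Imp f g).
  - eapply pv_wk; [exact H|inc|inc].
  - apply pv_impL with f g; [left; auto| |].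
    + apply pv_ax with f; simpl; auto.
    + apply pv_ax with g; simpl; auto.
Qed.

Lemma pv_cutL f G D : Pv G [f] -> Pv (f :: G) D -> Pv G D.
Proof. intros H1 H2. apply pv_cut with f; auto. eapply pv_wk; [exact H1|inc|inc]. Qed.

Lemma pv_trans_r f g G D : Pv [f] [g] -> Pv G (f :: D) -> Pv G (g :: D).
Proof.
  intros H1 H2. apply pv_cut with f.
  - eapply pv_wk; [exact H2|inc|inc].
  - eapply pv_wk; [exact H1|inc|inc].
Qed.

Lemma pv_trans_l f g G D : Pv [f] [g] -> Pv (g :: G) D -> Pv (f :: G) D.
Proof.
  intros H1 H2. apply pv_cut with g.
  - eapply pv_wk; [exact H1|inc|inc].
  - eapply pv_wk; [exact H2|inc|inc].
Qed.

Definition And (f g : form) : form := Neg (Imp f (Neg g)).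
Definition Or (f g : form) : form := Imp (Neg f) g.

Lemma pv_andL f g G D : Pv (f :: g :: G) D -> Pv (And f g :: G) D.
Proof.
  intro H. apply pv_negL. apply pv_impR with f (Neg g); [left; auto|].
  apply pv_negR. eapply pv_wk; [exact H|inc|inc].
Qed.

Lemma pv_andR f g G D : Pv G (f :: D) -> Pv G (g :: D) -> Pv G (And f g :: D).
Proof.
  intros H1 H2. apply pv_negR. apply pv_impL with f (Neg g); [left; auto| |].
  - eapply pv_wk; [exact H1|inc|inc].
  - apply pv_negL. eapply pv_wk; [exact H2|inc|inc].
Qed.

Lemma pv_orR f g G D : Pv G (f :: g :: D) -> Pv G (Or f g :: D).
Proof.
  intro H. apply pv_impR with (Neg f) g; [left; auto|].
  apply pv_negL. eapply pv_wk; [exact H|inc|inc].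
Qed.

Lemma pv_orL f g G D : Pv (f :: G) D -> Pv (g :: G) D -> Pv (Or f g :: G) D.
Proof.
  intros H1 H2. apply pv_impL with (Neg f) g; [left; auto| |].
  - apply pv_negR. eapply pv_wk; [exact H1|inc|inc].
  - eapply pv_wk; [exact H2|inc|inc].
Qed.

Fixpoint Conj (l : list form) : form :=
  match l with [] => Imp Bot Bot | f :: l => And f (Conj l) end.
Fixpoint Disj (l : list form) : form :=
  match l with [] => Bot | f :: l => Or f (Disj l) end.

Lemma pv_conjL l : forall G D, Pv (l ++ G) D -> Pv (Conj l :: G) D.
Proof.
  induction l as [|f l IH]; intros G D H; simpl in *.
  - eapply pv_wk; [exact H|inc|inc].
  - apply pv_andL. 
    assert (H' : Pv (Conj l :: f :: G) D) by (apply IH; eapply pv_wk; [exact H|inc|inc]).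
    eapply pv_wk; [exact H'|inc|inc].
Qed.

Lemma pv_conjR l : forall G D, (forall f, In f l -> Pv G (f :: D)) -> Pv G (Conj l :: D).
Proof.
  induction l as [|f l IH]; intros G D H; simpl in *.
  - apply pv_impR with Bot Bot; [left; auto|]. apply pv_bot; left; auto.
  - apply pv_andR; auto.
Qed.

Lemma pv_disjR l : forall G D, Pv G (l ++ D) -> Pv G (Disj l :: D).
Proof.
  induction l as [|f l IH]; intros G D H; simpl in *.
  - eapply pv_wk; [exact H|inc|inc].
  - apply pv_orR.
    assert (H' : Pv G (Disj l :: f :: D)) by (apply IH; eapply pv_wk; [exact H|inc|inc]).
    eapply pv_wk; [exact H'|inc|inc].
Qed.

Lemma pv_disjL l : forall G D, (forall f, In f l -> Pv (f :: G) D) -> Pv (Disj l :: G) D.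
Proof.
  induction l as [|f l IH]; intros G D H; simpl in *.
  - apply pv_bot; left; auto.
  - apply pv_orL; auto.
Qed.

End Kit.

Section Modal.
Variables P A : Type.
Notation form := (form P A).
Notation prog := (prog P A).
Notation Pv G D := (prov P A (G, D)).
Notation Neg := (Neg P A).

Ltac inc := let z := fresh "z" in let H := fresh "Hz" in
  intros z H; repeat (progress (simpl in *) || rewrite in_app_iff in * ); intuition (subst; simpl; auto).
Ltac wk H := eapply pv_wk; [exact H|inc|inc].

Lemma pv_tr (a b c : form) : Pv [a] [b] -> Pv [b] [c] -> Pv [a] [c].
Proof. intros H1 H2. apply pv_cut with b; [wk H1|wk H2]. Qed.

Lemma box_mono p (a b : form) : Pv [a] [b] -> Pv [Box p a] [Box p b].
Proof. intro H. apply (pv_box P A p b [a] []). exact H. Qed.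

Lemma boxc_mono p (a b : form) : Pv [a] [b] -> Pv [BoxC p a] [BoxC p b].
Proof. intro H. apply (pv_boxc P A p b [a] []). exact H. Qed.

Lemma adjC p (X Y : form) : Pv [] [Y; Box p (Neg X)] -> Pv [X] [BoxC p Y].
Proof.
  intro H. assert (H1 := pv_boxc P A p Y [] [Neg X] H). simpl in H1.
  apply pv_negR_inv. wk H1.
Qed.

Lemma adjB p (X Y : form) : Pv [] [Y; BoxC p (Neg X)] -> Pv [X] [Box p Y].
Proof.
  intro H. assert (H1 := pv_box P A p Y [] [Neg X] H). simpl in H1.
  apply pv_negR_inv. wk H1.
Qed.

Lemma G1 p (psi : form) : Pv [] [Box p (Neg (BoxC p psi)); psi].
Proof.
  assert (H : Pv [] [Neg (BoxC p psi); BoxC p psi]).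
  { apply pv_negR. apply pv_ax with (BoxC p psi); simpl; auto. }
  exact (pv_box P A p _ [] [psi] H).
Qed.

Lemma G1c p (psi : form) : Pv [] [BoxC p (Neg (Box p psi)); psi].
Proof.
  assert (H : Pv [] [Neg (Box p psi); Box p psi]).
  { apply pv_negR. apply pv_ax with (Box p psi); simpl; auto. }
  exact (pv_boxc P A p _ [] [psi] H).
Qed.

Lemma BSeqR p q (th : form) : Pv [BoxC q (BoxC p th)] [BoxC (Seq p q) th].
Proof.
  apply adjC. set (X := BoxC q (BoxC p th)).
  apply pv_seqR with p q (Neg X); [simpl; auto|].
  assert (H : Pv [] [Neg X; BoxC q (BoxC p th)]).
  { apply pv_negR. apply pv_ax with X; simpl; auto. }
  assert (H2 := pv_box P A q _ [] [BoxC p th] H). simpl in H2.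
  assert (H3 := pv_box P A p _ [] [th] H2). simpl in H3.
  wk H3.
Qed.

Lemma BCupR p q (th : form) : Pv [BoxC p th; BoxC q th] [BoxC (Cup p q) th].
Proof.
  set (X0 := BoxC p th). set (X1 := BoxC q th). set (Z := Imp X0 (Neg X1)).
  assert (H : Pv [] [th; Box (Cup p q) Z]).
  { apply pv_cupR with p q Z; [simpl; auto| |].
    - assert (H1 : Pv [] [Z; BoxC p th]).
      { apply pv_impR with X0 (Neg X1); [simpl; auto|]. apply pv_ax with X0; simpl; auto. }
      assert (H2 := pv_box P A p _ [] [th] H1). simpl in H2. wk H2.
    - assert (H1 : Pv [] [Z; BoxC q th]).
      { apply pv_impR with X0 (Neg X1); [simpl; auto|]. apply pv_negR. apply pv_ax with X1; simpl; auto. }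
      assert (H2 := pv_box P A q _ [] [th] H1). simpl in H2. wk H2. }
  assert (H1 := pv_boxc P A (Cup p q) th [] [Z] H). simpl in H1.
  assert (H2 : Pv [] [Z; BoxC (Cup p q) th]) by wk H1.
  apply pv_impR_inv in H2. apply pv_negR_inv in H2. wk H2.
Qed.

Lemma BTestR (phi th : form) : Pv [Imp phi th] [BoxC (Test phi) th].
Proof.
  apply adjC. apply pv_testR with phi (Neg (Imp phi th)); [simpl; auto|].
  apply pv_negR. apply pv_impL with phi th; [simpl; auto| |].
  - apply pv_ax with phi; simpl; auto.
  - apply pv_ax with th; simpl; auto.
Qed.

Lemma BStarInd p (chi : form) : Pv [chi] [BoxC p chi] -> Pv [chi] [BoxC (Star p) chi].
Proof.
  intro H.
  assert (H1 : Pv [] [Neg chi; BoxC p chi]) by (apply pv_negR; wk H).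
  assert (H2 := pv_box P A p _ [] [chi] H1). simpl in H2.
  assert (H3 : Pv [Neg chi] [Box p (Neg chi)]) by (apply pv_negL; wk H2).
  apply pv_star0 in H3.
  assert (H4 : Pv [] [chi; Box (Star p) (Neg chi)]) by (apply pv_negL_inv; exact H3).
  assert (H5 := pv_boxc P A (Star p) chi [] [Neg chi] H4). simpl in H5.
  apply pv_negR_inv. wk H5.
Qed.

Lemma BSeqL p q (psi : form) : Pv [BoxC (Seq p q) psi] [BoxC q (BoxC p psi)].
Proof.
  set (Y := BoxC (Seq p q) psi). apply adjC.
  assert (H1 : Pv [] [psi; Box p (Box q (Neg Y))]).
  { assert (H := G1 (Seq p q) psi).
    assert (H' : Pv [Box (Seq p q) (Neg Y)] [Box p (Box q (Neg Y))]).
    { apply pv_seqL with p q (Neg Y); [simpl; auto|]. apply pv_ax with (Box p (Box q (Neg Y))); simpl; auto. }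
    apply pv_cut with (Box (Seq p q) (Neg Y)); [wk H|wk H']. }
  assert (H2 := pv_boxc P A p psi [] [Box q (Neg Y)] H1). simpl in H2. exact H2.
Qed.

Lemma BCupL1 p q (psi : form) : Pv [BoxC (Cup p q) psi] [BoxC p psi].
Proof.
  set (Y := BoxC (Cup p q) psi). apply adjC.
  assert (H := G1 (Cup p q) psi).
  assert (H' : Pv [Box (Cup p q) (Neg Y)] [Box p (Neg Y)]).
  { apply pv_cupL with p q (Neg Y); [simpl; auto|]. apply pv_ax with (Box p (Neg Y)); simpl; auto. }
  apply pv_cut with (Box (Cup p q) (Neg Y)); [wk H|wk H'].
Qed.

Lemma BCupL2 p q (psi : form) : Pv [BoxC (Cup p q) psi] [BoxC q psi].
Proof.
  set (Y := BoxC (Cup p q) psi). apply adjC.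
  assert (H := G1 (Cup p q) psi).
  assert (H' : Pv [Box (Cup p q) (Neg Y)] [Box q (Neg Y)]).
  { apply pv_cupL with p q (Neg Y); [simpl; auto|]. apply pv_ax with (Box q (Neg Y)); simpl; auto. }
  apply pv_cut with (Box (Cup p q) (Neg Y)); [wk H|wk H'].
Qed.

Lemma BStarL1 p (psi : form) : Pv [BoxC (Star p) psi] [psi].
Proof.
  set (Y := BoxC (Star p) psi).
  assert (H := G1 (Star p) psi).
  assert (H' : Pv [Box (Star p) (Neg Y)] [Neg Y]).
  { apply pv_starL with p (Neg Y); [simpl; auto|]. apply pv_ax with (Neg Y); simpl; auto. }
  assert (H2 : Pv [] [Neg Y; psi]) by (apply pv_cut with (Box (Star p) (Neg Y)); [wk H|wk H']).
  apply pv_negR_inv in H2. exact H2.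
Qed.

Lemma BTestL (phi psi : form) : Pv [BoxC (Test phi) psi; phi] [psi].
Proof.
  set (Y := BoxC (Test phi) psi).
  assert (H := G1 (Test phi) psi).
  assert (H' : Pv [Box (Test phi) (Neg Y); phi] [Neg Y]).
  { apply pv_testL with phi (Neg Y); [simpl; auto| |].
    - apply pv_ax with phi; simpl; auto.
    - apply pv_ax with (Neg Y); simpl; auto. }
  assert (H2 : Pv [phi] [Neg Y; psi]) by (apply pv_cut with (Box (Test phi) (Neg Y)); [wk H|wk H']).
  apply pv_negR_inv in H2. wk H2.
Qed.

Lemma BStarL2 p (psi : form) : Pv [BoxC (Star p) psi] [BoxC p (BoxC (Star p) psi)].
Proof.
  set (Y := BoxC (Star p) psi). set (Z := Box (Star p) (Neg Y)).
  assert (H0 : Pv [] [Z; psi]) by apply G1.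
  assert (H2a : Pv [BoxC (Star p) (Neg Z)] [Y]).
  { apply boxc_mono. apply pv_negL. wk H0. }
  assert (H2b : Pv [Neg Z] [BoxC (Star p) (Neg Z)]).
  { assert (Hz : Pv [Z] [Box p Z]).
    { apply pv_starL with p (Neg Y); [simpl; auto|]. apply pv_ax with (Box p Z); simpl; auto. }
    apply pv_star0 in Hz.
    assert (H1 : Pv [] [Neg Z; Box (Star p) Z]) by (apply pv_negR; wk Hz).
    assert (H2 := pv_boxc P A (Star p) (Neg Z) [] [Z] H1). simpl in H2.
    apply pv_negL. wk H2. }
  assert (H2c : Pv [Neg Y] [Z]).
  { assert (H := pv_tr _ _ _ H2b H2a). apply pv_negL_inv in H. apply pv_negL. wk H. }
  assert (H2d : Pv [Z] [Box p (Neg Y)]).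
  { assert (Hz : Pv [Z] [Box p Z]).
    { apply pv_starL with p (Neg Y); [simpl; auto|]. apply pv_ax with (Box p Z); simpl; auto. }
    assert (Hz2 : Pv [Z] [Neg Y]).
    { apply pv_starL with p (Neg Y); [simpl; auto|]. apply pv_ax with (Neg Y); simpl; auto. }
    exact (pv_tr _ _ _ Hz (box_mono p _ _ Hz2)). }
  assert (H2 := pv_tr _ _ _ H2c H2d).
  apply pv_negL_inv in H2.
  assert (H3 := pv_boxc P A p Y [] [Neg Y] H2). simpl in H3.
  apply pv_negR_inv. wk H3.
Qed.

End Modal.

Scheme form_mut := Induction for Defs.form Sort Prop
with prog_mut := Induction for Defs.prog Sort Prop.
Combined Scheme form_prog_mut from form_mut, prog_mut.

Section Clos.
Variables P A : Type.
Notation form := (form P A).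
Notation prog := (prog P A).

Inductive dec : form -> form -> Prop :=
| d_impl f g : dec (Imp f g) f
| d_impr f g : dec (Imp f g) g
| d_atom a g : dec (Box (Atom a) g) g
| d_seq p q g : dec (Box (Seq p q) g) (Box p (Box q g))
| d_cupl p q g : dec (Box (Cup p q) g) (Box p g)
| d_cupr p q g : dec (Box (Cup p q) g) (Box q g)
| d_star1 p g : dec (Box (Star p) g) g
| d_star2 p g : dec (Box (Star p) g) (Box p (Box (Star p) g))
| d_test1 f g : dec (Box (Test f) g) f
| d_test2 f g : dec (Box (Test f) g) g
| c_atom a g : dec (BoxC (Atom a) g) g
| c_seq p q g : dec (BoxC (Seq p q) g) (BoxC q (BoxC p g))
| c_cupl p q g : dec (BoxC (Cup p q) g) (BoxC p g)
| c_cupr p q g : dec (BoxC (Cup p q) g) (BoxC q g)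
| c_star1 p g : dec (BoxC (Star p) g) g
| c_star2 p g : dec (BoxC (Star p) g) (BoxC p (BoxC (Star p) g))
| c_test1 f g : dec (BoxC (Test f) g) f
| c_test2 f g : dec (BoxC (Test f) g) g.

Definition closedC (C : list form) := forall x y, In x C -> dec x y -> In y C.

Fixpoint fl (f : form) : list form :=
  match f with
  | Bot => [Bot]
  | Var q => [Var q]
  | Imp f g => Imp f g :: fl f ++ fl g
  | Box p g => flb p g ++ fl g
  | BoxC p g => flc p g ++ fl g
  end
with flb (p : prog) (g : form) : list form :=
  match p with
  | Atom a => [Box (Atom a) g]
  | Seq p q => Box (Seq p q) g :: flb p (Box q g) ++ flb q g
  | Cup p q => Box (Cup p q) g :: flb p g ++ flb q g
  | Star p => Box (Star p) g :: flb p (Box (Star p) g)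
  | Test h => Box (Test h) g :: fl h
  end
with flc (p : prog) (g : form) : list form :=
  match p with
  | Atom a => [BoxC (Atom a) g]
  | Seq p q => BoxC (Seq p q) g :: flc q (BoxC p g) ++ flc p g
  | Cup p q => BoxC (Cup p q) g :: flc p g ++ flc q g
  | Star p => BoxC (Star p) g :: flc p (BoxC (Star p) g)
  | Test h => BoxC (Test h) g :: fl h
  end.

Lemma flb_head p g : In (Box p g) (flb p g).
Proof. destruct p; simpl; auto. Qed.
Lemma flc_head p g : In (BoxC p g) (flc p g).
Proof. destruct p; simpl; auto. Qed.
Lemma fl_self f : In f (fl f).
Proof.
  destruct f; simpl; auto.
  - apply in_app_iff; left; apply flb_head.
  - apply in_app_iff; left; apply flc_head.
Qed.


Lemma fl_closed_all :
  (forall f, closedC (fl f)) /\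
  (forall p g, (forall x y, In x (flb p g) -> dec x y -> In y (flb p g) \/ y = g) /\
               (forall x y, In x (flc p g) -> dec x y -> In y (flc p g) \/ y = g)).
Proof.
  apply (form_prog_mut P A (fun f => closedC (fl f))
    (fun p => forall g, (forall x y, In x (flb p g) -> dec x y -> In y (flb p g) \/ y = g) /\
               (forall x y, In x (flc p g) -> dec x y -> In y (flc p g) \/ y = g))).
  all: unfold closedC.
  - intros x y [<-|[]] H; inversion H.
  - intros q x y [<-|[]] H; inversion H.
  - intros f IHf g IHg x y Hx Hd. simpl in *. rewrite in_app_iff in *.
    destruct Hx as [<-|[Hx|Hx]].
    + inversion Hd; subst; right; [left|right]; apply fl_self.
    + right; left; eauto.
    + right; right; eauto.
  - intros p IHp g IHg x y Hx Hd. simpl in *. rewrite in_app_iff in *.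
    destruct Hx as [Hx|Hx].
    + destruct (proj1 (IHp g) x y Hx Hd) as [H| ->]; auto. right; apply fl_self.
    + right; eauto.
  - intros p IHp g IHg x y Hx Hd. simpl in *. rewrite in_app_iff in *.
    destruct Hx as [Hx|Hx].
    + destruct (proj2 (IHp g) x y Hx Hd) as [H| ->]; auto. right; apply fl_self.
    + right; eauto.
  - intros a g; split; intros x y [<-|[]] H; inversion H; auto.
  - intros p IHp q IHq g; split; intros x y Hx Hd; simpl in *; rewrite in_app_iff in *.
    + destruct Hx as [<-|[Hx|Hx]].
      * inversion Hd; subst. left; right; left; apply flb_head.
      * destruct (proj1 (IHp (Box q g)) x y Hx Hd) as [H| ->]; [auto|].
        left; right; right; apply flb_head.
      * destruct (proj1 (IHq g) x y Hx Hd) as [H| ->]; auto.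
    + destruct Hx as [<-|[Hx|Hx]].
      * inversion Hd; subst. left; right; left; apply flc_head.
      * destruct (proj2 (IHq (BoxC p g)) x y Hx Hd) as [H| ->]; [auto|].
        left; right; right; apply flc_head.
      * destruct (proj2 (IHp g) x y Hx Hd) as [H| ->]; auto.
  - intros p IHp q IHq g; split; intros x y Hx Hd; simpl in *; rewrite in_app_iff in *.
    + destruct Hx as [<-|[Hx|Hx]].
      * inversion Hd; subst; left; right; [left|right]; apply flb_head.
      * destruct (proj1 (IHp g) x y Hx Hd) as [H| ->]; auto.
      * destruct (proj1 (IHq g) x y Hx Hd) as [H| ->]; auto.
    + destruct Hx as [<-|[Hx|Hx]].
      * inversion Hd; subst; left; right; [left|right]; apply flc_head.
      * destruct (proj2 (IHp g) x y Hx Hd) as [H| ->]; auto.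
      * destruct (proj2 (IHq g) x y Hx Hd) as [H| ->]; auto.
  - intros p IHp g; split; intros x y Hx Hd; simpl in *.
    + destruct Hx as [<-|Hx].
      * inversion Hd; subst; auto. left; right; apply flb_head.
      * destruct (proj1 (IHp (Box (Star p) g)) x y Hx Hd) as [H| ->]; auto.
    + destruct Hx as [<-|Hx].
      * inversion Hd; subst; auto. left; right; apply flc_head.
      * destruct (proj2 (IHp (BoxC (Star p) g)) x y Hx Hd) as [H| ->]; auto.
  - intros h IHh g; split; intros x y Hx Hd; simpl in *.
    + destruct Hx as [<-|Hx].
      * inversion Hd; subst; auto. left; right; apply fl_self.
      * left; right; eauto.
    + destruct Hx as [<-|Hx].
      * inversion Hd; subst; auto. left; right; apply fl_self.
      * left; right; eauto.
Qed.

Definition closure (l : list form) : list form := flat_map fl l.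

Lemma closure_closed l : closedC (closure l).
Proof.
  intros x y Hx Hd. unfold closure in *. apply in_flat_map in Hx as [f [Hf Hx]].
  apply in_flat_map. exists f; split; auto. exact (proj1 fl_closed_all f x y Hx Hd).
Qed.

Lemma closure_incl l : incl l (closure l).
Proof. intros f Hf. apply in_flat_map. exists f; split; auto. apply fl_self. Qed.

Fixpoint testsC (C : list form) (p : prog) : Prop :=
  match p with
  | Atom _ => True
  | Seq p q => testsC C p /\ testsC C q
  | Cup p q => testsC C p /\ testsC C q
  | Star p => testsC C p
  | Test h => In h C
  end.

Section WithC.
Variable C : list form.
Hypothesis HC : closedC C.

Lemma box_in_sub p : forall X, In (Box p X) C -> In X C.
Proof.
  induction p; intros X H.
  - eapply HC; eauto. constructor.
  - apply IHp2, IHp1. eapply HC; eauto. constructor.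
  - apply IHp1. eapply HC; eauto. constructor.
  - eapply HC; eauto. constructor.
  - eapply HC; eauto. constructor.
Qed.

Lemma boxc_in_sub p : forall X, In (BoxC p X) C -> In X C.
Proof.
  induction p; intros X H.
  - eapply HC; eauto. constructor.
  - apply IHp1, IHp2. eapply HC; eauto. constructor.
  - apply IHp1. eapply HC; eauto. constructor.
  - eapply HC; eauto. constructor.
  - eapply HC; eauto. constructor.
Qed.

Lemma box_tests p : forall X, In (Box p X) C -> testsC C p.
Proof.
  induction p; intros X H; simpl.
  - auto.
  - split.
    + apply (IHp1 (Box p2 X)). eapply HC; eauto. constructor.
    + apply (IHp2 X). apply (box_in_sub p1). eapply HC; eauto. constructor.
  - split; [apply (IHp1 X)|apply (IHp2 X)]; eapply HC; eauto; constructor.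
  - apply (IHp (Box (Star p) X)). eapply HC; eauto. constructor.
  - eapply HC; eauto. constructor.
Qed.

Lemma boxc_tests p : forall X, In (BoxC p X) C -> testsC C p.
Proof.
  induction p; intros X H; simpl.
  - auto.
  - split.
    + apply (IHp1 X). apply (boxc_in_sub p2). eapply HC; eauto. constructor.
    + apply (IHp2 (BoxC p1 X)). eapply HC; eauto. constructor.
  - split; [apply (IHp1 X)|apply (IHp2 X)]; eapply HC; eauto; constructor.
  - apply (IHp (BoxC (Star p) X)). eapply HC; eauto. constructor.
  - eapply HC; eauto. constructor.
Qed.

End WithC.
End Clos.

Section Canon.
Variables P A : Type.
Notation form := (form P A).
Notation prog := (prog P A).
Notation Pv G D := (prov P A (G, D)).
Notation Neg := (Neg P A).

Ltac inc := let z := fresh "z" in let H := fresh "Hz" in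
  intros z H; repeat (progress (simpl in *) || rewrite in_app_iff in * ); intuition (subst; simpl; auto).
Ltac wk H := eapply pv_wk; [exact H|inc|inc].

Definition cfilter {X : Type} (Q : X -> Prop) (l : list X) : list X :=
  filter (fun x => if excluded_middle_informative (Q x) then true else false) l.
Lemma cfilter_In {X : Type} (Q : X -> Prop) l x : In x (cfilter Q l) <-> In x l /\ Q x.
Proof.
  unfold cfilter. rewrite filter_In.
  destruct (excluded_middle_informative (Q x)); split; intros [H1 H2]; auto; discriminate.
Qed.

Variable C : list form.
Hypothesis HC : closedC P A C.

Definition atomP (B : list form * list form) : Prop :=
  incl (fst B) C /\ incl (snd B) C /\ (forall f, In f C -> In f (fst B) \/ In f (snd B)) /\
  ~ Pv (fst B) (snd B).

Lemma lind_gen (X : list form) K : forall G D, ~ Pv G (X ++ D) ->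
  exists G' D', incl G G' /\ incl D D' /\ incl G' (G ++ K) /\ incl D' (D ++ K) /\
    (forall f, In f K -> In f G' \/ In f D') /\ ~ Pv G' (X ++ D').
Proof.
  induction K as [|f K IH]; intros G D H.
  - exists G, D. split; [inc|split; [inc|split; [inc|split; [inc|split; [intros f []|]]]]]. auto.
  - destruct (classic (Pv (f :: G) (X ++ D))) as [Hp|Hp].
    + assert (H' : ~ Pv G (X ++ f :: D)).
      { intro H1. apply H. apply pv_cut with f; [wk H1|exact Hp]. }
      destruct (IH G (f :: D) H') as [G' [D' [H1 [H2 [H3 [H4 [H5 H6]]]]]]].
      exists G', D'. split; [auto|split; [intros z Hz; apply H2; right; auto|split; [|split; [|split]]]]; auto.
      * intros z Hz. apply H3 in Hz. rewrite in_app_iff in *; simpl in *; tauto.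
      * intros z Hz. apply H4 in Hz. rewrite in_app_iff in *; simpl in *; tauto.
      * intros g [<-|Hg]; auto. right; apply H2; left; auto.
    + destruct (IH (f :: G) D Hp) as [G' [D' [H1 [H2 [H3 [H4 [H5 H6]]]]]]].
      exists G', D'. split; [intros z Hz; apply H1; right; auto|split; [auto|split; [|split; [|split]]]]; auto.
      * intros z Hz. apply H3 in Hz. rewrite in_app_iff in *; simpl in *; tauto.
      * intros z Hz. apply H4 in Hz. rewrite in_app_iff in *; simpl in *; tauto.
      * intros g [<-|Hg]; auto. left; apply H1; left; auto.
Qed.

Lemma lind (X : list form) G D : incl G C -> incl D C -> ~ Pv G (X ++ D) ->
  exists B, atomP B /\ incl G (fst B) /\ incl D (snd B) /\ ~ Pv (fst B) (X ++ snd B).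
Proof.
  intros HG HD H. destruct (lind_gen X C G D H) as [G' [D' [H1 [H2 [H3 [H4 [H5 H6]]]]]]].
  exists (G', D'). simpl. split; [|auto].
  split; [|split; [|split]]; simpl; auto.
  - intros z Hz. apply H3 in Hz. apply in_app_iff in Hz as [Hz|Hz]; auto.
  - intros z Hz. apply H4 in Hz. apply in_app_iff in Hz as [Hz|Hz]; auto.
  - intro Hp. apply H6. wk Hp.
Qed.

Fixpoint parts (K : list form) : list (list form * list form) :=
  match K with
  | [] => [([], [])]
  | f :: K => flat_map (fun B => [(f :: fst B, snd B); (fst B, f :: snd B)]) (parts K)
  end.

Lemma parts_spec K (Q : form -> Prop) : exists B, In B (parts K) /\
  (forall f, In f (fst B) <-> In f K /\ Q f) /\ (forall f, In f (snd B) <-> In f K /\ ~ Q f).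
Proof.
  induction K as [|g K [B [HB [H1 H2]]]].
  - exists ([], []). simpl. split; auto. split; intro f; tauto.
  - destruct (classic (Q g)) as [Hq|Hq].
    + exists (g :: fst B, snd B). split.
      * simpl. apply in_flat_map. exists B; simpl; auto.
      * simpl. split; intro f; rewrite ?H1, ?H2; split; intuition (subst; auto); tauto.
    + exists (fst B, g :: snd B). split.
      * simpl. apply in_flat_map. exists B; simpl; auto.
      * simpl. split; intro f; rewrite ?H1, ?H2; split; intuition (subst; auto); tauto.
Qed.

Definition AT := cfilter atomP (parts C).
Definition N := length AT.
Definition at_ (i : nat) := nth i AT ([], []).
Definition L i := fst (at_ i).
Definition R i := snd (at_ i).

Lemma at_atom i : i < N -> atomP (at_ i).
Proof. intro H. unfold at_. apply (proj2 (proj1 (cfilter_In atomP (parts C) _) (nth_In _ _ H))). Qed.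

Lemma atom_rep B : atomP B -> exists j, j < N /\ seteq (fst B) (L j) /\ seteq (snd B) (R j).
Proof.
  intros [HB1 [HB2 [HB3 HB4]]].
  destruct (parts_spec C (fun f => In f (fst B))) as [B' [Hin [H1 H2]]].
  assert (E1 : seteq (fst B) (fst B')).
  { intro f. rewrite H1. split; [intro; split; auto|tauto]. }
  assert (E2 : seteq (snd B) (snd B')).
  { intro f. rewrite H2. split.
    - intro Hf. split; auto. intro Hf'. apply HB4. apply pv_ax with f; auto.
    - intros [Hf Hf']. destruct (HB3 f Hf); tauto. }
  assert (HA : atomP B').
  { split; [|split; [|split]].
    - intros f Hf. apply H1 in Hf; tauto.
    - intros f Hf. apply H2 in Hf; tauto.
    - intros f Hf. destruct (HB3 f Hf); [left; apply E1|right; apply E2]; auto.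
    - intro Hp. apply HB4. eapply pv_wk; [exact Hp| |]; intros f Hf; [apply E1|apply E2]; auto. }
  assert (Hat : In B' AT) by (apply cfilter_In; auto).
  destruct (In_nth _ _ ([], []) Hat) as [j [Hj Ej]].
  exists j. split; auto. unfold L, R, at_. rewrite Ej. auto.
Qed.

Definition Rm (a : A) (i j : nat) : Prop :=
  i < N /\ j < N /\ (forall g, In (Box (Atom a) g) (L i) -> In g (L j)) /\
  (forall g, In (BoxC (Atom a) g) (L j) -> In g (L i)).
Definition Vm (i : nat) (q : P) : Prop := In (Var q) (L i).
Definition M : model P A := @Model P A nat Rm Vm.

Lemma rel_bounds p : forall i j, rel M p i j -> (i < N -> j < N) /\ (j < N -> i < N).
Proof.
  induction p; intros i j H; simpl in H.
  - destruct H as [H1 [H2 _]]. auto.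
  - destruct H as [u [H1 H2]]. apply IHp1 in H1. apply IHp2 in H2. tauto.
  - destruct H as [H|H]; [apply IHp1 in H|apply IHp2 in H]; auto.
  - induction H.
    + apply IHp; auto.
    + auto.
    + tauto.
  - destruct H as [-> _]. auto.
Qed.

Section AtomFacts.
Variable i : nat.
Hypothesis Hi : i < N.
Lemma a_np : ~ Pv (L i) (R i).
Proof. apply (at_atom i Hi). Qed.
Lemma a_cover f : In f C -> In f (L i) \/ In f (R i).
Proof. apply (at_atom i Hi). Qed.
Lemma a_LC : incl (L i) C.
Proof. apply (at_atom i Hi). Qed.
Lemma a_RC : incl (R i) C.
Proof. apply (at_atom i Hi). Qed.
Lemma a_disj f : In f (L i) -> In f (R i) -> False.
Proof. intros H1 H2. apply a_np. apply pv_ax with f; auto. Qed.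
Lemma a_inL f : In f C -> (In f (R i) -> Pv (L i) (R i)) -> In f (L i).
Proof. intros H1 H2. destruct (a_cover f H1); auto. exfalso; apply a_np; auto. Qed.
Lemma a_entail x y : In y C -> In x (L i) -> Pv [x] [y] -> In y (L i).
Proof.
  intros Hy Hx H. apply a_inL; auto. intro Hr. apply pv_cut with y.
  - eapply pv_wk; [exact H| |]; intros z Hz; simpl in *; intuition (subst; auto).
  - apply pv_ax with y; simpl; auto.
Qed.
Lemma a_entail2 x1 x2 y : In y C -> In x1 (L i) -> In x2 (L i) -> Pv [x1; x2] [y] -> In y (L i).
Proof.
  intros Hy Hx1 Hx2 H. apply a_inL; auto. intro Hr. apply pv_cut with y.
  - eapply pv_wk; [exact H| |]; intros z Hz; simpl in *; intuition (subst; auto).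
  - apply pv_ax with y; simpl; auto.
Qed.
Lemma a_notR f : In f (R i) -> ~ Pv (L i) (f :: R i).
Proof. intros H Hp. apply a_np. eapply pv_wk; [exact Hp|inc|]. intros z [<-|Hz]; auto. Qed.
End AtomFacts.

Lemma np_trans x y G D : Pv [x] [y] -> ~ Pv G (y :: D) -> ~ Pv G (x :: D).
Proof. intros H1 H2 H3. apply H2. exact (pv_trans_r P A _ _ _ _ H1 H3). Qed.

Lemma lind_ix (th : form) G D : incl G C -> incl D C -> ~ Pv G (th :: D) ->
  exists j, j < N /\ incl G (L j) /\ incl D (R j) /\ ~ Pv (L j) (th :: R j).
Proof.
  intros HG HD H. destruct (lind [th] G D HG HD H) as [B [HB [H1 [H2 H3]]]].
  destruct (atom_rep B HB) as [j [Hj [E1 E2]]]. exists j. split; auto.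
  split; [intros z Hz; apply E1; auto|split; [intros z Hz; apply E2; auto|]].
  intro Hp. apply H3. eapply pv_wk; [exact Hp| |]; intros z Hz; simpl in *;
    [apply E1; auto|destruct Hz as [<-|Hz]; [left; auto|right; apply E2; auto]].
Qed.

Definition chi (j : nat) : form := And P A (Conj P A (L j)) (Neg (Disj P A (R j))).

Lemma chiL j G D : Pv (L j ++ G) (R j ++ D) -> Pv (chi j :: G) D.
Proof.
  intro H. apply pv_andL.
  assert (H1 : Pv (L j ++ G) (Disj P A (R j) :: D)) by (apply pv_disjR; exact H).
  assert (H2 : Pv (Neg (Disj P A (R j)) :: L j ++ G) D) by (apply pv_negL; exact H1).
  assert (H3 : Pv (L j ++ Neg (Disj P A (R j)) :: G) D) by wk H2.
  apply pv_conjL in H3. exact H3.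
Qed.

Lemma chiR j : Pv (L j) (chi j :: R j).
Proof.
  apply pv_andR.
  - apply pv_conjR. intros f Hf. apply pv_ax with f; simpl; auto.
  - apply pv_negR. apply pv_disjL. intros f Hf. apply pv_ax with f; simpl; auto.
Qed.

Lemma chiS_R (Js : list nat) j : In j Js -> Pv (L j) (Disj P A (map chi Js) :: R j).
Proof.
  intro H. apply pv_disjR. assert (Hc := chiR j). eapply pv_wk; [exact Hc|inc|].
  intros z [<-|Hz]; apply in_app_iff; [left; apply in_map; auto|right; auto].
Qed.

Lemma chiS_L (Js : list nat) (Q : form) :
  (forall j, In j Js -> Pv (L j) (Q :: R j)) -> Pv [Disj P A (map chi Js)] [Q].
Proof.
  intro H. apply pv_disjL. intros f Hf. apply in_map_iff in Hf as [j [<- Hj]].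
  apply chiL. assert (H1 := H j Hj). wk H1.
Qed.

Lemma chi_np j (Q : form) : ~ Pv [chi j] [Q] -> ~ Pv (L j) (Q :: R j).
Proof. intros H1 H2. apply H1. apply chiL. wk H2. Qed.

Definition unboxA (a : A) (f : form) : list form :=
  match f with
  | Box p g => match p with Atom a' => if excluded_middle_informative (a' = a) then [g] else [] | _ => [] end
  | _ => [] end.
Definition unboxcA (a : A) (f : form) : list form :=
  match f with
  | BoxC p g => match p with Atom a' => if excluded_middle_informative (a' = a) then [g] else [] | _ => [] end
  | _ => [] end.

Lemma unboxA_spec a l g : In g (flat_map (unboxA a) l) <-> In (Box (Atom a) g) l.
Proof.
  rewrite in_flat_map. split.
  - intros [f [Hf Hg]]. destruct f as [| | | p h|]; simpl in Hg; try contradiction.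
    destruct p; simpl in Hg; try contradiction.
    destruct (excluded_middle_informative (a0 = a)) as [->|]; simpl in Hg; [|contradiction].
    destruct Hg as [<-|[]]; auto.
  - intro H. exists (Box (Atom a) g). split; auto. simpl.
    destruct (excluded_middle_informative (a = a)); simpl; auto.
Qed.

Lemma unboxcA_spec a l g : In g (flat_map (unboxcA a) l) <-> In (BoxC (Atom a) g) l.
Proof.
  rewrite in_flat_map. split.
  - intros [f [Hf Hg]]. destruct f as [| | | |p h]; simpl in Hg; try contradiction.
    destruct p; simpl in Hg; try contradiction.
    destruct (excluded_middle_informative (a0 = a)) as [->|]; simpl in Hg; [|contradiction].
    destruct Hg as [<-|[]]; auto.
  - intro H. exists (BoxC (Atom a) g). split; auto. simpl.
    destruct (excluded_middle_informative (a = a)); simpl; auto.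
Qed.

End Canon.

Section Truth.
Variables P A : Type.
Notation form := (form P A).
Notation prog := (prog P A).
Notation Pv G D := (prov P A (G, D)).
Notation Neg := (Neg P A).
Variable C : list form.
Hypothesis HC : closedC P A C.
Notation N := (N P A C).
Notation L := (L P A C).
Notation R := (R P A C).
Notation MM := (M P A C).

Ltac inc := let z := fresh "z" in let H := fresh "Hz" in
  intros z H; repeat (progress (simpl in *) || rewrite in_app_iff in * ); intuition (subst; simpl; auto).
Ltac wk H := eapply pv_wk; [exact H|inc|inc].

Definition Tf (f : form) := In f C -> forall i, i < N -> (sat MM i f <-> In f (L i)).
Definition PA (p : prog) := forall psi i j, i < N -> In (Box p psi) C -> In (Box p psi) (L i) ->
  rel MM p i j -> In psi (L j).
Definition PB (p : prog) := forall th i, i < N -> ~ Pv (L i) (Box p th :: R i) ->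
  exists j, j < N /\ rel MM p i j /\ ~ Pv (L j) (th :: R j).
Definition PA' (p : prog) := forall psi i j, i < N -> In (BoxC p psi) C -> In (BoxC p psi) (L i) ->
  rel MM p j i -> In psi (L j).
Definition PB' (p : prog) := forall th i, i < N -> ~ Pv (L i) (BoxC p th :: R i) ->
  exists j, j < N /\ rel MM p j i /\ ~ Pv (L j) (th :: R j).
Definition Tp (p : prog) := testsC P A C p -> PA p /\ PB p /\ PA' p /\ PB' p.

Lemma inC x y : In x C -> dec P A x y -> In y C.
Proof. intros H1 H2. exact (HC x y H1 H2). Qed.

Lemma bnd1 p i j : rel MM p i j -> i < N -> j < N.
Proof. intro H. apply (rel_bounds P A C p i j H). Qed.
Lemma bnd2 p i j : rel MM p i j -> j < N -> i < N.
Proof. intro H. apply (rel_bounds P A C p i j H). Qed.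

Lemma LC i x : i < N -> In x (L i) -> In x C.
Proof. intros Hi H. exact (a_LC P A C i Hi x H). Qed.

Lemma pv_two G D (x1 x2 y : form) : Pv G (x1 :: D) -> Pv G (x2 :: D) -> Pv [x1; x2] [y] -> Pv G (y :: D).
Proof.
  intros H1 H2 H3. apply pv_cut with x1; [wk H1|].
  apply pv_cut with x2; [wk H2|wk H3].
Qed.

Lemma tp_atom a : Tp (Atom a).
Proof.
  intros _. split; [|split; [|split]].
  - intros psi i j Hi HC1 Hin Hr. destruct Hr as [_ [_ [H1 _]]]. auto.
  - intros th i Hi Hn.
    set (G0 := flat_map (unboxA P A a) (L i)).
    set (Q := fun f => exists d, f = BoxC (Atom a) d /\ In d (R i)).
    set (D' := flat_map (unboxcA P A a) (cfilter Q C)).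
    assert (HG0 : forall g, In g G0 <-> In (Box (Atom a) g) (L i)) by (intro; apply unboxA_spec).
    assert (HD' : forall d, In d D' <-> In (BoxC (Atom a) d) C /\ In d (R i)).
    { intro d. unfold D'. rewrite unboxcA_spec, cfilter_In. unfold Q. split.
      - intros [H1 [d' [E H2]]]. injection E as <-. auto.
      - intros [H1 H2]. split; eauto. }
    assert (Hn' : ~ Pv G0 (th :: map (BoxC (Atom a)) D')).
    { intro Hp. apply Hn. apply pv_box in Hp. eapply pv_wk; [exact Hp| |].
      - intros z Hz. apply in_map_iff in Hz as [g [<- Hg]]. apply HG0; auto.
      - intros z [<-|Hz]; [left; auto|right]. apply HD'; auto. }
    assert (Hi1 : incl G0 C).
    { intros g Hg. apply HG0 in Hg. eapply inC; [eapply LC; eauto|constructor]. }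
    assert (Hi2 : incl (map (BoxC (Atom a)) D') C).
    { intros z Hz. apply in_map_iff in Hz as [g [<- Hg]]. apply HD'; auto. }
    destruct (lind_ix P A C th _ _ Hi1 Hi2 Hn') as [j [Hj [H1 [H2 H3]]]].
    exists j. split; auto. split; auto.
    split; [auto|split; [auto|split]].
    + intros g Hg. apply H1, HG0; auto.
    + intros g Hg. assert (HgC : In g C) by (eapply inC; [eapply LC; eauto|constructor]).
      apply (a_inL P A C i Hi g HgC). intro Hr. exfalso.
      apply (a_disj P A C j Hj (BoxC (Atom a) g)); auto.
      apply H2. apply in_map. apply HD'. split; auto. eapply LC; eauto.
  - intros psi i j Hi HC1 Hin Hr. destruct Hr as [_ [_ [_ H2]]]. auto.
  - intros th i Hi Hn.
    set (G0 := flat_map (unboxcA P A a) (L i)).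
    set (Q := fun f => exists d, f = Box (Atom a) d /\ In d (R i)).
    set (D' := flat_map (unboxA P A a) (cfilter Q C)).
    assert (HG0 : forall g, In g G0 <-> In (BoxC (Atom a) g) (L i)) by (intro; apply unboxcA_spec).
    assert (HD' : forall d, In d D' <-> In (Box (Atom a) d) C /\ In d (R i)).
    { intro d. unfold D'. rewrite unboxA_spec, cfilter_In. unfold Q. split.
      - intros [H1 [d' [E H2]]]. injection E as <-. auto.
      - intros [H1 H2]. split; eauto. }
    assert (Hn' : ~ Pv G0 (th :: map (Box (Atom a)) D')).
    { intro Hp. apply Hn. apply pv_boxc in Hp. eapply pv_wk; [exact Hp| |].
      - intros z Hz. apply in_map_iff in Hz as [g [<- Hg]]. apply HG0; auto.
      - intros z [<-|Hz]; [left; auto|right]. apply HD'; auto. }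
    assert (Hi1 : incl G0 C).
    { intros g Hg. apply HG0 in Hg. eapply inC; [eapply LC; eauto|constructor]. }
    assert (Hi2 : incl (map (Box (Atom a)) D') C).
    { intros z Hz. apply in_map_iff in Hz as [g [<- Hg]]. apply HD'; auto. }
    destruct (lind_ix P A C th _ _ Hi1 Hi2 Hn') as [j [Hj [H1 [H2 H3]]]].
    exists j. split; auto. split; auto.
    split; [auto|split; [auto|split]].
    + intros g Hg. assert (HgC : In g C) by (eapply inC; [eapply LC; eauto|constructor]).
      apply (a_inL P A C i Hi g HgC). intro Hr. exfalso.
      apply (a_disj P A C j Hj (Box (Atom a) g)); auto.
      apply H2. apply in_map. apply HD'. split; auto. eapply LC; eauto.
    + intros g Hg. apply H1, HG0; auto.
Qed.

Lemma tp_seq p q : Tp p -> Tp q -> Tp (Seq p q).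
Proof.
  intros Hp Hq [Tp1 Tq1]. destruct (Hp Tp1) as [PAp [PBp [PAp' PBp']]].
  destruct (Hq Tq1) as [PAq [PBq [PAq' PBq']]].
  split; [|split; [|split]].
  - intros psi i j Hi HC1 Hin [u [H1 H2]].
    assert (Hb : In (Box p (Box q psi)) C) by (eapply inC; eauto; constructor).
    assert (Hb' : In (Box p (Box q psi)) (L i)).
    { apply (a_entail P A C i Hi (Box (Seq p q) psi)); auto.
      apply pv_seqL with p q psi; [simpl; auto|]. apply pv_ax with (Box p (Box q psi)); simpl; auto. }
    assert (Hu := PAp _ _ _ Hi Hb Hb' H1).
    exact (PAq psi u j (bnd1 _ _ _ H1 Hi) (box_in_sub P A C HC p _ Hb) Hu H2).
  - intros th i Hi Hn.
    assert (Hn' : ~ Pv (L i) (Box p (Box q th) :: R i)).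
    { intro H. apply Hn. apply pv_seqR with p q th; [simpl; auto|wk H]. }
    destruct (PBp _ _ Hi Hn') as [u [Hu [H1 H2]]].
    destruct (PBq _ _ Hu H2) as [j [Hj [H3 H4]]].
    exists j. split; auto. split; auto. exists u; auto.
  - intros psi i j Hi HC1 Hin [u [H1 H2]].
    assert (Hb : In (BoxC q (BoxC p psi)) C) by (eapply inC; eauto; constructor).
    assert (Hb' : In (BoxC q (BoxC p psi)) (L i)).
    { apply (a_entail P A C i Hi (BoxC (Seq p q) psi)); auto. apply BSeqL. }
    assert (Hu := PAq' _ _ _ Hi Hb Hb' H2).
    exact (PAp' psi u j (bnd2 _ _ _ H2 Hi) (boxc_in_sub P A C HC q _ Hb) Hu H1).
  - intros th i Hi Hn.
    assert (Hn' : ~ Pv (L i) (BoxC q (BoxC p th) :: R i)) by (eapply np_trans; [apply BSeqR|exact Hn]).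
    destruct (PBq' _ _ Hi Hn') as [u [Hu [H1 H2]]].
    destruct (PBp' _ _ Hu H2) as [j [Hj [H3 H4]]].
    exists j. split; auto. split; auto. exists u; auto.
Qed.

Lemma tp_cup p q : Tp p -> Tp q -> Tp (Cup p q).
Proof.
  intros Hp Hq [Tp1 Tq1]. destruct (Hp Tp1) as [PAp [PBp [PAp' PBp']]].
  destruct (Hq Tq1) as [PAq [PBq [PAq' PBq']]].
  split; [|split; [|split]].
  - intros psi i j Hi HC1 Hin [H|H].
    + assert (Hb : In (Box p psi) C) by (eapply inC; eauto; constructor).
      eapply PAp; eauto. apply (a_entail P A C i Hi (Box (Cup p q) psi)); auto.
      apply pv_cupL with p q psi; [simpl; auto|]. apply pv_ax with (Box p psi); simpl; auto.
    + assert (Hb : In (Box q psi) C) by (eapply inC; eauto; constructor).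
      eapply PAq; eauto. apply (a_entail P A C i Hi (Box (Cup p q) psi)); auto.
      apply pv_cupL with p q psi; [simpl; auto|]. apply pv_ax with (Box q psi); simpl; auto.
  - intros th i Hi Hn.
    destruct (classic (Pv (L i) (Box p th :: R i))) as [H1|H1].
    + destruct (classic (Pv (L i) (Box q th :: R i))) as [H2|H2].
      * exfalso. apply Hn. apply pv_cupR with p q th; [simpl; auto|wk H1|wk H2].
      * destruct (PBq _ _ Hi H2) as [j [Hj [H3 H4]]]. exists j. split; auto. split; auto. right; auto.
    + destruct (PBp _ _ Hi H1) as [j [Hj [H3 H4]]]. exists j. split; auto. split; auto. left; auto.
  - intros psi i j Hi HC1 Hin [H|H].
    + assert (Hb : In (BoxC p psi) C) by (eapply inC; eauto; constructor).
      eapply PAp'; eauto. apply (a_entail P A C i Hi (BoxC (Cup p q) psi)); auto. apply BCupL1.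
    + assert (Hb : In (BoxC q psi) C) by (eapply inC; eauto; constructor).
      eapply PAq'; eauto. apply (a_entail P A C i Hi (BoxC (Cup p q) psi)); auto. apply BCupL2.
  - intros th i Hi Hn.
    destruct (classic (Pv (L i) (BoxC p th :: R i))) as [H1|H1].
    + destruct (classic (Pv (L i) (BoxC q th :: R i))) as [H2|H2].
      * exfalso. apply Hn. eapply pv_two; [exact H1|exact H2|apply BCupR].
      * destruct (PBq' _ _ Hi H2) as [j [Hj [H3 H4]]]. exists j. split; auto. split; auto. right; auto.
    + destruct (PBp' _ _ Hi H1) as [j [Hj [H3 H4]]]. exists j. split; auto. split; auto. left; auto.
Qed.

Lemma tp_test phi : Tf phi -> Tp (Test phi).
Proof.
  intros Hphi HpC. simpl in HpC. split; [|split; [|split]].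
  - intros psi i j Hi HC1 Hin [<- Hs].
    apply (Hphi HpC i Hi) in Hs.
    apply (a_entail2 P A C i Hi (Box (Test phi) psi) phi); auto.
    + eapply inC; eauto; constructor.
    + apply pv_testL with phi psi; [simpl; auto| |].
      * apply pv_ax with phi; simpl; auto.
      * apply pv_ax with psi; simpl; auto.
  - intros th i Hi Hn.
    assert (HL : In phi (L i)).
    { apply (a_inL P A C i Hi phi HpC). intro Hr. exfalso. apply Hn.
      apply pv_testR with phi th; [simpl; auto|]. apply pv_ax with phi; simpl; auto. }
    exists i. split; auto. split.
    + split; auto. apply (Hphi HpC i Hi); auto.
    + intro H. apply Hn. apply pv_testR with phi th; [simpl; auto|]. wk H.
  - intros psi i j Hi HC1 Hin [-> Hs].
    apply (Hphi HpC i Hi) in Hs.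
    apply (a_entail2 P A C i Hi (BoxC (Test phi) psi) phi); auto.
    + eapply inC; eauto; constructor.
    + apply BTestL.
  - intros th i Hi Hn.
    assert (Hn' : ~ Pv (phi :: L i) (th :: R i)).
    { intro H. apply Hn. apply (pv_trans_r P A (Imp phi th)); [apply BTestR|].
      apply pv_impR with phi th; [simpl; auto|]. wk H. }
    assert (HL : In phi (L i)).
    { apply (a_inL P A C i Hi phi HpC). intro Hr. exfalso. apply Hn'.
      apply pv_ax with phi; simpl; auto. }
    exists i. split; auto. split.
    + split; auto. apply (Hphi HpC i Hi); auto.
    + intro H. apply Hn'. wk H.
Qed.

End Truth.

Section Truth2.
Variables P A : Type.
Notation form := (form P A).
Notation prog := (prog P A).
Notation Pv G D := (prov P A (G, D)).
Variable C : list form.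
Hypothesis HC : closedC P A C.
Notation N := (N P A C).
Notation L := (L P A C).
Notation R := (R P A C).
Notation MM := (M P A C).
Notation Tf := (Tf P A C).
Notation Tp := (Tp P A C).

Lemma inC' x y : In x C -> dec P A x y -> In y C.
Proof. intros H1 H2. exact (HC x y H1 H2). Qed.

Lemma tp_star p : Tp p -> Tp (Star p).
Proof.
  intros Hp Tp1. destruct (Hp Tp1) as [PAp [PBp [PAp' PBp']]].
  split; [|split; [|split]].
  - intros psi i j Hi HC1 Hin Hr. simpl in Hr. apply clos_rt_rt1n in Hr.
    revert Hi Hin. induction Hr as [x|x y z Hxy Hyz IH]; intros Hi Hin.
    + apply (a_entail P A C x Hi (Box (Star p) psi)); auto.
      * eapply inC'; eauto; constructor.
      * apply pv_starL with p psi; [simpl; auto|]. apply pv_ax with psi; simpl; auto.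
    + assert (Hb : In (Box p (Box (Star p) psi)) C) by (eapply inC'; eauto; constructor).
      assert (Hb' : In (Box p (Box (Star p) psi)) (L x)).
      { apply (a_entail P A C x Hi (Box (Star p) psi)); auto.
        apply pv_starL with p psi; [simpl; auto|]. apply pv_ax with (Box p (Box (Star p) psi)); simpl; auto. }
      apply IH; [exact (bnd1 P A C _ _ _ Hxy Hi)|]. exact (PAp _ _ _ Hi Hb Hb' Hxy).
  - intros th i Hi Hn. apply NNPP. intro Hno.
    assert (Hall : forall j, j < N -> rel MM (Star p) i j -> Pv (L j) (th :: R j)).
    { intros j Hj Hr. apply NNPP. intro H. apply Hno. exists j. auto. }
    set (Js := cfilter (fun j => rel MM (Star p) i j) (seq 0 N)).
    assert (HJs : forall j, In j Js <-> j < N /\ rel MM (Star p) i j).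
    { intro j. unfold Js. rewrite cfilter_In, in_seq. split; intros [Ha Hb]; split; auto; lia. }
    set (X := Disj P A (map (chi P A C) Js)).
    assert (C1 : Pv [X] [Box p X]).
    { apply chiS_L. intros j Hj. apply NNPP. intro H. apply HJs in Hj as [Hj1 Hj2].
      destruct (PBp X j Hj1 H) as [k [Hk [Hr Hk2]]]. apply Hk2. apply chiS_R. apply HJs.
      split; auto. simpl in *. eapply rt_trans; [exact Hj2|apply rt_step; exact Hr]. }
    assert (C2 : Pv [X] [th]).
    { apply chiS_L. intros j Hj. apply HJs in Hj as [Hj1 Hj2]. auto. }
    assert (H3 := pv_star0 P A p X C1).
    assert (H4 := box_mono P A (Star p) _ _ C2).
    assert (H5 : Pv (L i) (X :: R i)).
    { apply chiS_R. apply HJs. split; auto. apply rt_refl. }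
    apply Hn. apply (pv_trans_r P A _ _ _ _ H4). apply (pv_trans_r P A _ _ _ _ H3). exact H5.
  - intros psi i j Hi HC1 Hin Hr. simpl in Hr. apply clos_rt_rtn1 in Hr.
    revert Hi Hin. induction Hr as [|y z Hyz Hjy IH]; intros Hi Hin.
    + apply (a_entail P A C j Hi (BoxC (Star p) psi)); auto.
      * eapply inC'; eauto; constructor.
      * apply BStarL1.
    + assert (Hb : In (BoxC p (BoxC (Star p) psi)) C) by (eapply inC'; eauto; constructor).
      assert (Hb' : In (BoxC p (BoxC (Star p) psi)) (L z)).
      { apply (a_entail P A C z Hi (BoxC (Star p) psi)); auto. apply BStarL2. }
      apply IH; [exact (bnd2 P A C _ _ _ Hyz Hi)|]. exact (PAp' _ _ _ Hi Hb Hb' Hyz).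
  - intros th i Hi Hn. apply NNPP. intro Hno.
    assert (Hall : forall j, j < N -> rel MM (Star p) j i -> Pv (L j) (th :: R j)).
    { intros j Hj Hr. apply NNPP. intro H. apply Hno. exists j. auto. }
    set (Js := cfilter (fun j => rel MM (Star p) j i) (seq 0 N)).
    assert (HJs : forall j, In j Js <-> j < N /\ rel MM (Star p) j i).
    { intro j. unfold Js. rewrite cfilter_In, in_seq. split; intros [Ha Hb]; split; auto; lia. }
    set (X := Disj P A (map (chi P A C) Js)).
    assert (C1 : Pv [X] [BoxC p X]).
    { apply chiS_L. intros j Hj. apply NNPP. intro H. apply HJs in Hj as [Hj1 Hj2].
      destruct (PBp' X j Hj1 H) as [k [Hk [Hr Hk2]]]. apply Hk2. apply chiS_R. apply HJs.
      split; auto. simpl in *. eapply rt_trans; [apply rt_step; exact Hr|exact Hj2]. }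
    assert (C2 : Pv [X] [th]).
    { apply chiS_L. intros j Hj. apply HJs in Hj as [Hj1 Hj2]. auto. }
    assert (H3 := BStarInd P A p X C1).
    assert (H4 := boxc_mono P A (Star p) _ _ C2).
    assert (H5 : Pv (L i) (X :: R i)).
    { apply chiS_R. apply HJs. split; auto. apply rt_refl. }
    apply Hn. apply (pv_trans_r P A _ _ _ _ H4). apply (pv_trans_r P A _ _ _ _ H3). exact H5.
Qed.

Lemma tf_bot : Tf Bot.
Proof.
  intros _ i Hi. simpl. split; [tauto|]. intro H. apply (a_np P A C i Hi). apply pv_bot; auto.
Qed.

Lemma tf_var q : Tf (Var q).
Proof. intros _ i Hi. simpl. unfold Vm. tauto. Qed.

Lemma tf_imp f g : Tf f -> Tf g -> Tf (Imp f g).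
Proof.
  intros Hf Hg HI i Hi.
  assert (fC : In f C) by exact (inC' _ _ HI (d_impl P A f g)).
  assert (gC : In g C) by exact (inC' _ _ HI (d_impr P A f g)).
  simpl. rewrite (Hf fC i Hi), (Hg gC i Hi). split.
  - intro H. apply (a_inL P A C i Hi _ HI). intro Hr. exfalso.
    assert (HfL : In f (L i)).
    { apply (a_inL P A C i Hi _ fC). intro Hr2.
      apply pv_impR with f g; auto. apply pv_ax with f; simpl; auto. }
    apply (a_np P A C i Hi). apply pv_impR with f g; auto. apply pv_ax with g; simpl; auto.
  - intros HL Hfl. apply (a_inL P A C i Hi _ gC). intro Hr.
    apply pv_impL with f g; auto.
    + apply pv_ax with f; simpl; auto.
    + apply pv_ax with g; simpl; auto.
Qed.

Lemma tf_box p psi : Tp p -> Tf psi -> Tf (Box p psi).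
Proof.
  intros Hp Hpsi HB i Hi.
  assert (psiC := box_in_sub P A C HC p psi HB).
  assert (tC := box_tests P A C HC p psi HB).
  destruct (Hp tC) as [PAp [PBp _]]. simpl. split.
  - intro Hs. apply (a_inL P A C i Hi _ HB). intro Hr. exfalso.
    destruct (PBp psi i Hi (a_notR P A C i Hi _ Hr)) as [j [Hj [Hrel Hn]]].
    apply Hn. apply pv_ax with psi; [|left; auto]. apply (Hpsi psiC j Hj). apply Hs; auto.
  - intros Hin j Hrel. apply (Hpsi psiC j (bnd1 P A C _ _ _ Hrel Hi)). exact (PAp psi i j Hi HB Hin Hrel).
Qed.

Lemma tf_boxc p psi : Tp p -> Tf psi -> Tf (BoxC p psi).
Proof.
  intros Hp Hpsi HB i Hi.
  assert (psiC := boxc_in_sub P A C HC p psi HB).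
  assert (tC := boxc_tests P A C HC p psi HB).
  destruct (Hp tC) as [_ [_ [PAp' PBp']]]. simpl. split.
  - intro Hs. apply (a_inL P A C i Hi _ HB). intro Hr. exfalso.
    destruct (PBp' psi i Hi (a_notR P A C i Hi _ Hr)) as [j [Hj [Hrel Hn]]].
    apply Hn. apply pv_ax with psi; [|left; auto]. apply (Hpsi psiC j Hj). apply Hs; auto.
  - intros Hin j Hrel. apply (Hpsi psiC j (bnd2 P A C _ _ _ Hrel Hi)). exact (PAp' psi i j Hi HB Hin Hrel).
Qed.

Lemma truth : forall f, Tf f.
Proof.
  apply (proj1 (form_prog_mut P A (fun f => Tf f) (fun p => Tp p)
    tf_bot tf_var (fun f Hf g Hg => tf_imp f g Hf Hg) (fun p Hp psi Hpsi => tf_box p psi Hp Hpsi)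
    (fun p Hp psi Hpsi => tf_boxc p psi Hp Hpsi)
    (tp_atom P A C HC) (fun p Hp q Hq => tp_seq P A C HC p q Hp Hq)
    (fun p Hp q Hq => tp_cup P A C HC p q Hp Hq) tp_star (tp_test P A C HC))).
Qed.

End Truth2.

Lemma complete P A (G D : list (form P A)) : valid (G, D) -> prov P A (G, D).
Proof.
  intro Hv. apply NNPP. intro Hn.
  set (C := closure P A (G ++ D)).
  assert (HC : closedC P A C) by apply closure_closed.
  assert (HG : incl G C) by (intros f Hf; apply closure_incl; apply in_app_iff; auto).
  assert (HD : incl D C) by (intros f Hf; apply closure_incl; apply in_app_iff; auto).
  destruct (lind P A C [] G D HG HD Hn) as [B [HB [H1 [H2 _]]]].
  destruct (atom_rep P A C B HB) as [j [Hj [E1 E2]]].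
  destruct (Hv (M P A C) j) as [f [Hf Hs]].
  - intros f Hf. simpl in Hf. apply (truth P A C HC f (HG f Hf) j Hj). apply E1, H1, Hf.
  - simpl in Hf. apply (truth P A C HC f (HD f Hf) j Hj) in Hs.
    apply (a_disj P A C j Hj f); auto. apply E2, H2, Hf.
Qed.


Theorem mainTheorem6 (P A : Type) (G D : list (form P A)) :
  (gprovable (G, D) <-> cprovable (G, D)) /\ (cprovable (G, D) <-> valid (G, D)).
Proof.
  split; split; intro H.
  - apply prov_c, complete, gsound, H.
  - apply prov_g, complete, csound, H.
  - apply csound, H.
  - apply prov_c, complete, H.
Qed.
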